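(* Let $\Omega\subset\mathbb{C}$ be a simply connected domain and let $(g,\mathcal{P},\mathcal{Q})$ be a Weierstrass data of the first kind on $\Omega$. Define $h:=\frac{1}{g}$ and $\mathcal{N}:=2\mathcal{P}$. Then there exists a $\mathcal{C}^2$ function $\mathcal{M}:\Omega\to\mathbb{R}$ such that $$\mathcal{M}_z=\frac{1}{g}\,\mathcal{P}_z+g\,\mathcal{Q}_z .$$ Moreover, for any such $\mathcal{M}$, the triple $(h,\mathcal{M},\mathcal{N})$ is a Weierstrass data of the second kind on $\Omega$, and $$\mathcal{M}_z-(\mathrm{Re}\,h)\,\mathcal{N}_z=-\frac{1}{\overline{g}}\left(\mathcal{P}_z-|g|^2\mathcal{Q}_z\right).$$
   Context: $\Omega\subset\mathbb{R}^2\equiv\mathbb{C}$ has complex coordinate $z=u+iv$, and $\partial_z=\frac12(\partial_u-i\partial_v)$, $\partial_{\overline z}=\frac12(\partial_u+i\partial_v)$; subscripts denote partial derivatives. A Weierstrass data of the first kind on $\Omega$ is a triple $(g,\mathcal{P},\mathcal{Q})$ where $g:\Omega\to\mathbb{C}\setminus\{0\}$ and $\mathcal{P},\mathcal{Q}:\Omega\to\mathbb{R}$ are $\mathcal{C}^2$, satisfying $g_{\overline z}=0$, $\mathcal{P}_{z\overline z}=|g|^2\mathcal{Q}_{z\overline z}$, and $\mathcal{P}_z-|g|^2\mathcal{Q}_z\neq0$ at every point of $\Omega$. A Weierstrass data of the second kind on $\Omega$ is a triple $(h,\mathcal{M},\mathcal{N})$ where $h:\Omega\to\mathbb{C}\setminus\{0\}$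 and $\mathcal{M},\mathcal{N}:\Omega\to\mathbb{R}$ are $\mathcal{C}^2$, satisfying $h_{\overline z}=0$, $\mathcal{M}_{z\overline z}=(\mathrm{Re}\,h)\,\mathcal{N}_{z\overline z}$, and $\mathcal{M}_z-(\mathrm{Re}\,h)\,\mathcal{N}_z\neq0$ at every point of $\Omega$. *)

(* Defs.v *)
From Stdlib Require Import Reals.
From Coquelicot Require Import Coquelicot.
Open Scope R_scope.

Definition pu (f : C -> R) (z : C) : R := Derive (fun t => f (fst z + t, snd z)) 0.
Definition pv (f : C -> R) (z : C) : R := Derive (fun t => f (fst z, snd z + t)) 0.

Definition C1_on (Om : C -> Prop) (f : C -> R) : Prop :=
  forall z, Om z ->
    continuous f z /\
    ex_derive (fun t => f (fst z + t, snd z)) 0 /\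
    ex_derive (fun t => f (fst z, snd z + t)) 0 /\
    continuous (pu f) z /\ continuous (pv f) z.

Definition C2_on (Om : C -> Prop) (f : C -> R) : Prop :=
  C1_on Om f /\ C1_on Om (pu f) /\ C1_on Om (pv f).

Definition C2c_on (Om : C -> Prop) (F : C -> C) : Prop :=
  C2_on Om (fun w => Re (F w)) /\ C2_on Om (fun w => Im (F w)).

Definition cpu (F : C -> C) (z : C) : C :=
  (pu (fun w => Re (F w)) z, pu (fun w => Im (F w)) z).
Definition cpv (F : C -> C) (z : C) : C :=
  (pv (fun w => Re (F w)) z, pv (fun w => Im (F w)) z).

Local Open Scope C_scope.
Definition dz (F : C -> C) (z : C) : C := / 2 * (cpu F z - Ci * cpv F z).
Definition dzb (F : C -> C) (z : C) : C := / 2 * (cpu F z + Ci * cpv F z).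

Definition cR (f : C -> R) : C -> C := fun z => RtoC (f z).

Definition dzR (f : C -> R) : C -> C := dz (cR f).
Definition dzzbR (f : C -> R) : C -> C := dz (dzb (cR f)).

Local Open Scope R_scope.
Definition unit_interval (s : R) : Prop := 0 <= s <= 1.

Definition path_in (Om : C -> Prop) (gam : R -> C) : Prop :=
  (forall s, continuous gam s) /\ (forall s, unit_interval s -> Om (gam s)).

Definition domain (Om : C -> Prop) : Prop :=
  open Om /\ (exists z, Om z) /\
  forall a b, Om a -> Om b ->
    exists gam, path_in Om gam /\ gam 0 = a /\ gam 1 = b.

Definition simply_connected (Om : C -> Prop) : Prop :=
  domain Om /\
  forall gam : R -> C, path_in Om gam -> gam 0 = gam 1 ->
    exists H : R * R -> C,
      (forall p, continuous H p) /\
      (forall s t, unit_interval s -> unit_interval t -> Om (H (s, t))) /\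
      (forall s, H (s, 0) = gam s) /\
      (forall s, H (s, 1) = gam 0) /\
      (forall t, H (0, t) = gam 0) /\
      (forall t, H (1, t) = gam 0).

Local Open Scope C_scope.
Definition WD1 (Om : C -> Prop) (g : C -> C) (P Q : C -> R) : Prop :=
  C2c_on Om g /\ C2_on Om P /\ C2_on Om Q /\
  (forall z, Om z -> g z <> 0) /\
  (forall z, Om z -> dzb g z = 0) /\
  (forall z, Om z -> dzzbR P z = RtoC (Cmod (g z) ^ 2)%R * dzzbR Q z) /\
  (forall z, Om z -> dzR P z - RtoC (Cmod (g z) ^ 2)%R * dzR Q z <> 0).

Definition WD2 (Om : C -> Prop) (h : C -> C) (M N : C -> R) : Prop :=
  C2c_on Om h /\ C2_on Om M /\ C2_on Om N /\
  (forall z, Om z -> h z <> 0) /\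
  (forall z, Om z -> dzb h z = 0) /\
  (forall z, Om z -> dzzbR M z = RtoC (Re (h z)) * dzzbR N z) /\
  (forall z, Om z -> dzR M z - RtoC (Re (h z)) * dzR N z <> 0).

(* Main.v *)
Require Import Defs.
From Stdlib Require Import Reals Lra Lia ZArith ClassicalEpsilon Classical FunctionalExtensionality.
From Coquelicot Require Import Coquelicot.
Open Scope R_scope.

Lemma cont_C (f : C -> R) z : continuous f z <-> continuity_2d_pt (fun x y => f (x,y)) (fst z) (snd z).
Proof.
destruct z as [x y]. rewrite continuity_2d_pt_filterlim. unfold continuous. simpl.
split; intro H; eapply filterlim_ext; try exact H; intros [u v]; reflexivity.
Qed.
Lemma ballR (x e y : R) : ball x e y <-> Rabs (y - x) < e.
Proof. reflexivity. Qed.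
Lemma ballC (x y : C) e : ball x e y <-> Rabs (fst y - fst x) < e /\ Rabs (snd y - snd x) < e.
Proof. reflexivity. Qed.
Lemma cont_R_eps (f:R->R) x: continuous f x <-> forall eps:posreal, exists d:posreal, forall t, Rabs (t-x) < d -> Rabs (f t - f x) < eps.
Proof.
unfold continuous. rewrite filterlim_locally. split.
- intros H eps. destruct (H eps) as [d Hd]. exists d. intros t Ht. apply Hd. exact Ht.
- intros H eps. destruct (H eps) as [d Hd]. exists d. intros t Ht. apply Hd. exact Ht.
Qed.
Lemma c2d_x f x y : continuity_2d_pt f x y -> continuous (fun t => f t y) x.
Proof. intros H. apply cont_R_eps. intros eps. destruct (H eps) as [d Hd]. exists d. intros t Ht.
apply Hd; auto. rewrite Rminus_diag, Rabs_R0. apply cond_pos. Qed.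
Lemma c2d_y f x y : continuity_2d_pt f x y -> continuous (fun t => f x t) y.
Proof. intros H. apply cont_R_eps. intros eps. destruct (H eps) as [d Hd]. exists d. intros t Ht.
apply Hd; auto. rewrite Rminus_diag, Rabs_R0. apply cond_pos. Qed.
Lemma contC_x (f : C -> R) x y : continuous f (x,y) -> continuous (fun t => f (t,y)) x.
Proof. intros H. apply cont_C in H. exact (c2d_x _ _ _ H). Qed.
Lemma contC_y (f : C -> R) x y : continuous f (x,y) -> continuous (fun t => f (x,t)) y.
Proof. intros H. apply cont_C in H. exact (c2d_y _ _ _ H). Qed.
Lemma between_abs x w c r t : Rabs (x - c) < r -> Rabs (w - c) < r -> Rmin x w <= t <= Rmax x w -> Rabs (t - c) < r.
Proof. unfold Rmin, Rmax. intros H1 H2 H3. apply Rabs_def2 in H1. apply Rabs_def2 in H2. apply Rabs_def1; destruct (Rle_dec x w); lra. Qed.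
Lemma loc_abs w c r : Rabs (w - c) < r -> locally w (fun s => Rabs (s - c) < r).
Proof. intros Hw. assert (Hp : 0 < r - Rabs (w - c)) by lra.
  exists (mkposreal _ Hp). intros s Hs. assert (Hs' : Rabs (s - w) < r - Rabs (w - c)) by exact Hs.
  replace (s - c) with ((s - w) + (w - c)) by ring.
  eapply Rle_lt_trans. apply Rabs_triang. lra. Qed.
Lemma zero_deriv_1d (f : R -> R) x y : (forall t, Rmin x y <= t <= Rmax x y -> is_derive f t 0) -> f x = f y.
Proof.
intros H. destruct (MVT_gen f x y (fun _ => 0)) as [c [_ Hc]].
- intros t Ht. apply H. lra.
- intros t Ht. apply continuity_pt_filterlim. apply (ex_derive_continuous (K:=R_AbsRing) (V:=R_NormedModule)). exists 0. apply H. exact Ht.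
- lra.
Qed.

Section Prim.
Variable Om : C -> Prop.
Variables a b : C -> R.
Hypothesis Hca : forall z, Om z -> continuous a z.
Hypothesis Hcb : forall z, Om z -> continuous b z.
Hypothesis Hdb : forall x y, Om (x,y) -> ex_derive (fun u => b (u,y)) x.
Hypothesis Hcdb : forall x y, Om (x,y) -> continuity_2d_pt (fun u v => Derive (fun s => b (s,v)) u) x y.
Hypothesis Hclo : forall x y, Om (x,y) -> is_derive (fun t => a (x,t)) y (Derive (fun s => b (s,y)) x).

Definition sq (c : C) (r : R) (w : C) := Rabs (fst w - fst c) < r /\ Rabs (snd w - snd c) < r.

Definition L (x w : C) : R :=
  RInt (fun t => a (t, snd x)) (fst x) (fst w) + RInt (fun t => b (fst w, t)) (snd x) (snd w).

Lemma L_du c r x w : (forall y, sq c r y -> Om y) -> sq c r x -> sq c r w ->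
  is_derive (fun s => L x (s, snd w)) (fst w) (a w).
Proof.
intros HO [Hx1 Hx2] [Hw1 Hw2].
destruct x as [x1 x2]; destruct w as [w1 w2]; simpl in *.
unfold L; simpl.
assert (Hloc := loc_abs _ _ _ Hw1).
replace (a (w1, w2)) with (a (w1, x2) + (a (w1,w2) - a (w1,x2))) by ring.
apply (is_derive_plus (fun s => RInt (fun t => a (t, x2)) x1 s) (fun s => RInt (fun t => b (s, t)) x2 w2)).
- apply (is_derive_RInt (fun t => a (t, x2)) (fun s => RInt (fun t => a (t, x2)) x1 s) x1).
  + eapply filter_imp; [|exact Hloc]. intros s Hs. apply (RInt_correct (V:=R_CompleteNormedModule)).
    apply (ex_RInt_continuous (V:=R_CompleteNormedModule)). intros t Ht. apply contC_x. apply Hca. apply HO. split; simpl; auto.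
    eapply between_abs; [exact Hx1|exact Hs|exact Ht].
  + apply contC_x. apply Hca. apply HO. split; simpl; auto.
- assert (HD := is_derive_RInt_param (fun s t => b (s,t)) x2 w2 w1).
  assert (HR : is_RInt (fun t => Derive (fun u => b (u, t)) w1) x2 w2 (a (w1,w2) - a (w1,x2))).
  { apply (is_RInt_derive (fun t => a (w1,t))).
    - intros t Ht. apply Hclo. apply HO. split; simpl; auto. eapply between_abs; [exact Hx2|exact Hw2|exact Ht].
    - intros t Ht. apply (c2d_y (fun u v => Derive (fun s => b (s,v)) u)). apply Hcdb. apply HO. split; simpl; auto. eapply between_abs; [exact Hx2|exact Hw2|exact Ht]. }
  rewrite <- (is_RInt_unique _ _ _ _ HR). apply HD.
  + eapply filter_imp; [|exact Hloc]. intros s Hs t Ht. apply Hdb. apply HO. split; simpl; auto.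
    eapply between_abs; [exact Hx2|exact Hw2|exact Ht].
  + intros t Ht. apply Hcdb. apply HO. split; simpl; auto. eapply between_abs; [exact Hx2|exact Hw2|exact Ht].
  + eapply filter_imp; [|exact Hloc]. intros s Hs.
    apply (ex_RInt_continuous (V:=R_CompleteNormedModule)). intros t Ht. apply contC_y. apply Hcb. apply HO. split; simpl; auto.
    eapply between_abs; [exact Hx2|exact Hw2|exact Ht].
Qed.

Lemma L_dv c r x w : (forall y, sq c r y -> Om y) -> sq c r x -> sq c r w ->
  is_derive (fun s => L x (fst w, s)) (snd w) (b w).
Proof.
intros HO [Hx1 Hx2] [Hw1 Hw2].
destruct x as [x1 x2]; destruct w as [w1 w2]; simpl in *.
unfold L; simpl.
assert (Hloc := loc_abs _ _ _ Hw2).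
replace (b (w1, w2)) with (0 + b (w1,w2)) by ring.
apply (is_derive_plus (fun s => RInt (fun t => a (t, x2)) x1 w1) (fun s => RInt (fun t => b (w1, t)) x2 s)).
- apply (is_derive_const (K:=R_AbsRing) (V:=R_NormedModule)).
- apply (is_derive_RInt (fun t => b (w1, t)) (fun s => RInt (fun t => b (w1, t)) x2 s) x2).
  + eapply filter_imp; [|exact Hloc]. intros s Hs. apply (RInt_correct (V:=R_CompleteNormedModule)).
    apply (ex_RInt_continuous (V:=R_CompleteNormedModule)). intros t Ht. apply contC_y. apply Hcb. apply HO. split; simpl; auto.
    eapply between_abs; [exact Hx2|exact Hs|exact Ht].
  + apply contC_y. apply Hcb. apply HO. split; simpl; auto.
Qed.


Lemma const2 (phi : C -> R) c r x y :
  (forall w, sq c r w -> is_derive (fun s => phi (s, snd w)) (fst w) 0 /\ is_derive (fun s => phi (fst w, s)) (snd w) 0) ->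
  sq c r x -> sq c r y -> phi x = phi y.
Proof.
intros H [Hx1 Hx2] [Hy1 Hy2]. destruct x as [x1 x2]; destruct y as [y1 y2]; simpl in *.
transitivity (phi (y1, x2)).
- apply (zero_deriv_1d (fun s => phi (s, x2))). intros t Ht.
  apply (H (t, x2)). split; simpl; auto. eapply between_abs; [exact Hx1|exact Hy1|exact Ht].
- apply (zero_deriv_1d (fun s => phi (y1, s))). intros t Ht.
  apply (H (y1, t)). split; simpl; auto. eapply between_abs; [exact Hx2|exact Hy2|exact Ht].
Qed.

Lemma L_refl x : L x x = 0.
Proof. unfold L. rewrite !RInt_point. simpl. unfold zero; simpl. ring. Qed.

Lemma cocycle c r x y z : (forall w, sq c r w -> Om w) -> sq c r x -> sq c r y -> sq c r z ->
  L x z = L x y + L y z.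
Proof.
intros HO Hx Hy Hz.
assert (E : L x z - L y z = L x y - L y y).
{ apply (const2 (fun w => L x w - L y w) c r); auto.
  intros w Hw. split.
  - replace 0 with (a w - a w) by ring. apply (is_derive_minus (fun s => L x (s, snd w)) (fun s => L y (s, snd w))).
    + eapply L_du; eauto. + eapply L_du; eauto.
  - replace 0 with (b w - b w) by ring. apply (is_derive_minus (fun s => L x (fst w, s)) (fun s => L y (fst w, s))).
    + eapply L_dv; eauto. + eapply L_dv; eauto. }
rewrite L_refl in E. lra.
Qed.

End Prim.

Lemma mvt_bound (h dh : R -> R) x y B : (forall t, Rmin x y <= t <= Rmax x y -> is_derive h t (dh t) /\ Rabs (dh t) <= B) ->
  Rabs (h y - h x) <= B * Rabs (y - x).
Proof.
intros H. destruct (MVT_gen h x y dh) as [c [Hc E]].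
- intros t Ht. apply H. lra.
- intros t Ht. apply continuity_pt_filterlim. apply (ex_derive_continuous (K:=R_AbsRing) (V:=R_NormedModule)).
  exists (dh t). apply H. exact Ht.
- rewrite E, Rabs_mult. apply Rmult_le_compat_r. apply Rabs_pos. apply H. exact Hc.
Qed.

Lemma cont_from_partials (f du dv : C -> R) c r B : 0 < r ->
  (forall w, sq c r w -> is_derive (fun s => f (s, snd w)) (fst w) (du w) /\ is_derive (fun s => f (fst w, s)) (snd w) (dv w)) ->
  (forall w, sq c r w -> Rabs (du w) <= B /\ Rabs (dv w) <= B) -> continuous f c.
Proof.
intros Hr HD HB. apply cont_C. destruct c as [c1 c2]. simpl. intros eps.
assert (HB0 : 0 <= B). { destruct (HB (c1,c2)) as [H _]. split; simpl; rewrite Rminus_diag, Rabs_R0; lra. pose proof (Rabs_pos (du (c1,c2))). lra. }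
assert (Hd : 0 < Rmin r (eps / (2 * B + 1))). { apply Rmin_pos. lra. apply Rdiv_lt_0_compat. apply cond_pos. lra. }
exists (mkposreal _ Hd). simpl. intros u v Hu Hv.
assert (M1 := Rmin_l r (eps / (2 * B + 1))). assert (M2 := Rmin_r r (eps / (2 * B + 1))).
assert (E1 : Rabs (f (u, v) - f (u, c2)) <= B * Rabs (v - c2)).
{ apply (mvt_bound (fun s => f (u, s)) (fun s => dv (u, s))). intros t Ht.
  assert (Sq : sq (c1, c2) r (u, t)). { split; simpl. lra. eapply between_abs; [| |exact Ht]; rewrite ?Rminus_diag, ?Rabs_R0; lra. }
  split. apply (HD (u,t) Sq). apply (HB (u,t) Sq). }
assert (E2 : Rabs (f (u, c2) - f (c1, c2)) <= B * Rabs (u - c1)).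
{ apply (mvt_bound (fun s => f (s, c2)) (fun s => du (s, c2))). intros t Ht.
  assert (Sq : sq (c1, c2) r (t, c2)). { split; simpl. eapply between_abs; [| |exact Ht]; rewrite ?Rminus_diag, ?Rabs_R0; lra. rewrite Rminus_diag, Rabs_R0. lra. }
  split. apply (HD (t,c2) Sq). apply (HB (t,c2) Sq). }
replace (f (u, v) - f (c1, c2)) with ((f (u, v) - f (u, c2)) + (f (u, c2) - f (c1, c2))) by ring.
eapply Rle_lt_trans. apply Rabs_triang.
apply Rle_lt_trans with (B * Rabs (v - c2) + B * Rabs (u - c1)). lra.
apply Rle_lt_trans with (B * (eps / (2 * B + 1)) + B * (eps / (2 * B + 1))).
{ apply Rplus_le_compat; apply Rmult_le_compat_l; lra. }
replace (B * (eps / (2 * B + 1)) + B * (eps / (2 * B + 1))) with (eps * (2 * B / (2 * B + 1))) by (field; lra).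
rewrite <- (Rmult_1_r eps) at 2. apply Rmult_lt_compat_l. apply cond_pos.
apply Rmult_lt_reg_r with (2 * B + 1). lra. unfold Rdiv. rewrite Rmult_assoc, Rinv_l by lra. lra.
Qed.

Definition GoodSq (Om : C -> Prop) (H : R * R -> C) x y d :=
  exists eta, 0 < eta /\ forall p1 p2, x <= p1 <= x + d -> y <= p2 <= y + d ->
    exists c r, 0 < r /\ (forall w, sq c r w -> Om w) /\
      forall q1 q2, Rabs (q1 - p1) < eta -> Rabs (q2 - p2) < eta -> sq c r (H (q1, q2)).

Lemma GoodSq_union Om H x y d : 0 < d ->
  GoodSq Om H x y (d/2) -> GoodSq Om H (x + d/2) y (d/2) ->
  GoodSq Om H x (y + d/2) (d/2) -> GoodSq Om H (x + d/2) (y + d/2) (d/2) ->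
  GoodSq Om H x y d.
Proof.
intros Hd [e1 [He1 G1]] [e2 [He2 G2]] [e3 [He3 G3]] [e4 [He4 G4]].
exists (Rmin (Rmin e1 e2) (Rmin e3 e4)). split.
{ repeat apply Rmin_pos; auto. }
assert (M1 := Rmin_l (Rmin e1 e2) (Rmin e3 e4)). assert (M2 := Rmin_r (Rmin e1 e2) (Rmin e3 e4)).
assert (M3 := Rmin_l e1 e2). assert (M4 := Rmin_r e1 e2). assert (M5 := Rmin_l e3 e4). assert (M6 := Rmin_r e3 e4).
set (m := Rmin (Rmin e1 e2) (Rmin e3 e4)) in *.
intros p1 p2 Hp1 Hp2.
destruct (Rle_dec p1 (x + d/2)); destruct (Rle_dec p2 (y + d/2)).
- destruct (G1 p1 p2) as [c [rr [Hr [HO Hq]]]]; try lra.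
  exists c, rr. split; [exact Hr|split; [exact HO|]]. intros u1 u2 Hu1 Hu2. apply Hq; lra.
- destruct (G3 p1 p2) as [c [rr [Hr [HO Hq]]]]; try lra.
  exists c, rr. split; [exact Hr|split; [exact HO|]]. intros u1 u2 Hu1 Hu2. apply Hq; lra.
- destruct (G2 p1 p2) as [c [rr [Hr [HO Hq]]]]; try lra.
  exists c, rr. split; [exact Hr|split; [exact HO|]]. intros u1 u2 Hu1 Hu2. apply Hq; lra.
- destruct (G4 p1 p2) as [c [rr [Hr [HO Hq]]]]; try lra.
  exists c, rr. split; [exact Hr|split; [exact HO|]]. intros u1 u2 Hu1 Hu2. apply Hq; lra.
Qed.

Lemma GoodSq_local Om H px py : open Om -> continuous H (px, py) -> Om (H (px, py)) ->
  exists eps, 0 < eps /\ forall x y d, 0 < d < eps -> x <= px <= x + d -> y <= py <= y + d -> GoodSq Om H x y d.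
Proof.
intros Hop Hc HOm.
destruct (Hop _ HOm) as [r Hr].
unfold continuous in Hc. rewrite filterlim_locally in Hc.
destruct (Hc r) as [del Hdel].
exists (del / 2). split. { destruct del; simpl; lra. }
intros x y d Hd Hx Hy. exists (del/2). split. { destruct del; simpl; lra. }
intros p1 p2 Hp1 Hp2. exists (H (px, py)), r. split. { apply cond_pos. } split.
- intros w Hw. apply Hr. exact Hw.
- intros q1 q2 Hq1 Hq2. apply (Hdel (q1, q2)). split; simpl.
  + change (Rabs (q1 - px) < del). apply Rabs_def1; apply Rabs_def2 in Hq1; lra.
  + change (Rabs (q2 - py) < del). apply Rabs_def1; apply Rabs_def2 in Hq2; lra.
Qed.

Definition em P := excluded_middle_informative P.

Definition pickq (Om : C -> Prop) (H : R * R -> C) (s : R * R * R) : R * R * R :=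
  let '(x, y, d) := s in
  if em (GoodSq Om H x y (d/2)) then
    if em (GoodSq Om H (x + d/2) y (d/2)) then
      if em (GoodSq Om H x (y + d/2) (d/2)) then (x + d/2, y + d/2, d/2)
      else (x, y + d/2, d/2)
    else (x + d/2, y, d/2)
  else (x, y, d/2).

Fixpoint bseq Om H (n : nat) : R * R * R :=
  match n with O => (0, 0, 1) | S n => pickq Om H (bseq Om H n) end.

Lemma INR_pow2 n : INR n + 1 <= 2 ^ n.
Proof. induction n. simpl; lra. rewrite S_INR. simpl. assert (P := pos_INR n). lra. Qed.

Lemma leb_main Om H : open Om -> (forall p, continuous H p) ->
  (forall s t, 0 <= s <= 1 -> 0 <= t <= 1 -> Om (H (s, t))) -> GoodSq Om H 0 0 1.
Proof.
intros Hop Hc HOm.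
apply NNPP. intros Hbad.
set (X n := fst (fst (bseq Om H n))). set (Y n := snd (fst (bseq Om H n))). set (D n := snd (bseq Om H n)).
assert (HD : forall n, D n = / 2 ^ n).
{ induction n. unfold D; simpl; rewrite Rinv_1; reflexivity. unfold D in *; simpl. destruct (bseq Om H n) as [[x y] d]. simpl in *.
  unfold pickq. destruct (em _); [destruct (em _); [destruct (em _)|]|]; simpl; rewrite IHn, Rinv_mult; field; apply pow_nonzero; lra. }
assert (Dpos : forall n, 0 < D n). { intros n. rewrite HD. apply Rinv_0_lt_compat, pow_lt. lra. }
assert (Inv : forall n, ~ GoodSq Om H (X n) (Y n) (D n) /\ X n <= X (S n) /\ X (S n) + D (S n) <= X n + D n
   /\ Y n <= Y (S n) /\ Y (S n) + D (S n) <= Y n + D n).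
{ induction n.
  - unfold X, Y, D. simpl (bseq Om H 0). simpl fst; simpl snd. split; [exact Hbad|].
    simpl. unfold pickq. destruct (em _); [destruct (em _); [destruct (em _)|]|]; simpl; lra.
  - destruct IHn as [Bn _]. assert (Dp := Dpos n).
    unfold X, Y, D in *. simpl (bseq Om H (S (S n))). simpl (bseq Om H (S n)) in *.
    destruct (bseq Om H n) as [[x y] d]. simpl in *.
    unfold pickq in *. destruct (em (GoodSq Om H x y (d/2))) as [G1|G1].
    2:{ simpl. split; auto. destruct (em _); [destruct (em _); [destruct (em _)|]|]; simpl; lra. }
    destruct (em (GoodSq Om H (x + d/2) y (d/2))) as [G2|G2].
    2:{ simpl. split; auto. destruct (em _); [destruct (em _); [destruct (em _)|]|]; simpl; lra. }
    destruct (em (GoodSq Om H x (y + d/2) (d/2))) as [G3|G3].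
    2:{ simpl. split; auto. destruct (em _); [destruct (em _); [destruct (em _)|]|]; simpl; lra. }
    simpl. split.
    + intros G4. apply Bn. apply GoodSq_union; auto.
    + destruct (em _); [destruct (em _); [destruct (em _)|]|]; simpl; lra. }
assert (Mono : forall n k, X n <= X (n + k)%nat /\ X (n + k)%nat + D (n + k)%nat <= X n + D n
   /\ Y n <= Y (n + k)%nat /\ Y (n + k)%nat + D (n + k)%nat <= Y n + D n).
{ intros n k. induction k. rewrite Nat.add_0_r. lra.
  rewrite Nat.add_succ_r. destruct (Inv (n + k)%nat) as [_ I]. lra. }
assert (Bx : forall n m, X m <= X n + D n).
{ intros n m. destruct (Nat.le_ge_cases n m) as [Hnm|Hnm].
  - destruct (Mono n (m - n)%nat) as [_ [I _]]. replace (n + (m - n))%nat with m in I by lia.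
    assert (Dp := Dpos m). lra.
  - destruct (Mono m (n - m)%nat) as [I _]. replace (m + (n - m))%nat with n in I by lia.
    assert (Dp := Dpos n). lra. }
assert (By : forall n m, Y m <= Y n + D n).
{ intros n m. destruct (Nat.le_ge_cases n m) as [Hnm|Hnm].
  - destruct (Mono n (m - n)%nat) as [_ [_ [_ I]]]. replace (n + (m - n))%nat with m in I by lia.
    assert (Dp := Dpos m). lra.
  - destruct (Mono m (n - m)%nat) as [_ [_ [I _]]]. replace (m + (n - m))%nat with n in I by lia.
    assert (Dp := Dpos n). lra. }
destruct (completeness (fun v => exists n, v = X n)) as [xs [Hxs1 Hxs2]].
{ exists (X 0%nat + D 0%nat). intros v [n ->]. apply Bx. }
{ exists (X 0%nat). exists 0%nat. reflexivity. }
destruct (completeness (fun v => exists n, v = Y n)) as [ys [Hys1 Hys2]].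
{ exists (Y 0%nat + D 0%nat). intros v [n ->]. apply By. }
{ exists (Y 0%nat). exists 0%nat. reflexivity. }
assert (Xin : forall n, X n <= xs <= X n + D n).
{ intros n. split. apply Hxs1. exists n; reflexivity. apply Hxs2. intros v [m ->]. apply Bx. }
assert (Yin : forall n, Y n <= ys <= Y n + D n).
{ intros n. split. apply Hys1. exists n; reflexivity. apply Hys2. intros v [m ->]. apply By. }
assert (X0 : X 0%nat = 0) by reflexivity. assert (Y0 : Y 0%nat = 0) by reflexivity. assert (D0 : D 0%nat = 1) by reflexivity.
assert (Hx01 := Xin 0%nat). assert (Hy01 := Yin 0%nat).
assert (Hxs01 : 0 <= xs <= 1) by lra. assert (Hys01 : 0 <= ys <= 1) by lra.
destruct (GoodSq_local Om H xs ys Hop (Hc _) (HOm _ _ Hxs01 Hys01)) as [eps [Heps Hloc]].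
destruct (archimed (/ eps)) as [Ha _].
set (n := Z.to_nat (up (/ eps))).
assert (Dn : D n < eps).
{ rewrite HD. assert (P := INR_pow2 n).
  assert (0 < / eps) by (apply Rinv_0_lt_compat; lra).
  assert (INR n >= / eps).
  { unfold n. rewrite INR_IZR_INZ. rewrite Z2Nat.id. lra.
    apply le_IZR. lra. }
  rewrite <- (Rinv_inv eps). apply Rinv_lt_contravar. apply Rmult_lt_0_compat. lra. apply pow_lt; lra. lra. }
destruct (Inv n) as [Bn _]. apply Bn. apply Hloc; auto.
Qed.

Fixpoint DS (L : C -> C -> R) (f : nat -> C) (k : nat) : R :=
  match k with O => 0 | S k => DS L f k + L (f k) (f (S k)) end.

Lemma DS_ext L f g k : (forall j, (j <= k)%nat -> f j = g j) -> DS L f k = DS L g k.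
Proof. induction k; intros H; simpl. reflexivity. rewrite IHk by (intros; apply H; lia). rewrite !H by lia. reflexivity. Qed.

Lemma DS_add L f k m : DS L f (k + m) = DS L f k + DS L (fun j => f (k + j)%nat) m.
Proof. induction m. simpl. rewrite Nat.add_0_r. ring. rewrite Nat.add_succ_r. simpl DS. rewrite IHm.
try rewrite Nat.add_succ_r; try rewrite Nat.add_0_r; ring. Qed.

Lemma DS_S L f k : DS L f (S k) = DS L f k + L (f k) (f (S k)).
Proof. reflexivity. Qed.

Definition PS L (g : R -> C) (n : nat) := DS L (fun i => g (INR i / INR n)) n.

Definition Fine (Om : C -> Prop) (g : R -> C) eta := 0 < eta /\ forall p, 0 <= p <= 1 ->
  exists c r, 0 < r /\ (forall w, sq c r w -> Om w) /\ forall q, Rabs (q - p) < eta -> sq c r (g q).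

Lemma Fine_exists Om g : open Om -> (forall s, continuous g s) -> (forall s, 0 <= s <= 1 -> Om (g s)) ->
  exists eta, Fine Om g eta.
Proof.
intros Hop Hc HOm. destruct (leb_main Om (fun p => g (fst p)) Hop) as [eta [He G]].
- intros [s t]. apply (continuous_comp fst g). apply continuous_fst. apply Hc.
- intros s t Hs Ht. apply HOm. exact Hs.
- exists eta. split; auto. intros p Hp. destruct (G p 0) as [c [r [Hr [HO Hq]]]]; try lra.
  exists c, r. split; auto. split; auto. intros q Hq'. apply (Hq q 0). exact Hq'. rewrite Rminus_0_r, Rabs_R0. exact He.
Qed.

Section Disc.
Variable Om : C -> Prop.
Variables a b : C -> R.
Hypothesis Hca : forall z, Om z -> continuous a z.
Hypothesis Hcb : forall z, Om z -> continuous b z.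
Hypothesis Hdb : forall x y, Om (x,y) -> ex_derive (fun u => b (u,y)) x.
Hypothesis Hcdb : forall x y, Om (x,y) -> continuity_2d_pt (fun u v => Derive (fun s => b (s,v)) u) x y.
Hypothesis Hclo : forall x y, Om (x,y) -> is_derive (fun t => a (x,t)) y (Derive (fun s => b (s,y)) x).

Let LL := L a b.
Let coc := cocycle Om a b Hca Hcb Hdb Hcdb Hclo.

Lemma tele c r f m : (forall w, sq c r w -> Om w) -> (forall j, (j <= m)%nat -> sq c r (f j)) ->
  DS LL f m = LL (f O) (f m).
Proof.
intros HO Hf. induction m; simpl.
- unfold LL. rewrite L_refl. reflexivity.
- rewrite IHm by (intros; apply Hf; lia). symmetry. apply (coc c r); auto; apply Hf; lia.
Qed.

Lemma INR_div_mul k n m : (0 < m)%nat -> (0 < n)%nat -> INR (k * m) / INR (n * m) = INR k / INR n.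
Proof. intros Hm Hn. rewrite !mult_INR. apply lt_0_INR in Hm. apply lt_0_INR in Hn. field. lra. Qed.

Lemma refine g eta n m : Fine Om g eta -> (0 < n)%nat -> / INR n < eta -> (0 < m)%nat ->
  PS LL g n = PS LL g (n * m).
Proof.
intros [He HF] Hn Hne Hm. unfold PS.
assert (Hn' := lt_0_INR _ Hn). assert (Hm' := lt_0_INR _ Hm).
assert (K : forall k, (k <= n)%nat -> DS LL (fun i => g (INR i / INR n)) k = DS LL (fun i => g (INR i / INR (n * m))) (k * m)).
{ induction k; intros Hk. reflexivity.
  replace (S k * m)%nat with (k * m + m)%nat by lia. rewrite DS_add. simpl. rewrite IHk by lia. f_equal.
  assert (Hkn : 0 <= INR k / INR n <= 1).
  { split. apply Rdiv_le_0_compat. apply pos_INR. lra. unfold Rdiv; apply Rmult_le_reg_r with (INR n); auto. rewrite Rmult_assoc, Rinv_l, Rmult_1_r, Rmult_1_l; [apply le_INR; lia | lra]. }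
  destruct (HF _ Hkn) as [c [r [Hr [HO Hq]]]].
  rewrite (tele c r); auto.
  - f_equal; f_equal. rewrite Nat.add_0_r. apply eq_sym, INR_div_mul; lia.
    replace (k * m + m)%nat with (S k * m)%nat by lia. apply eq_sym, INR_div_mul; lia.
  - intros j Hj. apply Hq. rewrite plus_INR, !mult_INR.
    replace ((INR k * INR m + INR j) / (INR n * INR m) - INR k / INR n) with (INR j / (INR n * INR m)) by (field; lra).
    rewrite Rabs_pos_eq. 2:{ apply Rdiv_le_0_compat. apply pos_INR. nra. }
    apply Rle_lt_trans with (/ INR n); auto.
    apply le_INR in Hj. unfold Rdiv. rewrite Rinv_mult.
    apply Rle_trans with (INR m * (/ INR n * / INR m)). apply Rmult_le_compat_r; auto.
    apply Rmult_le_pos; left; apply Rinv_0_lt_compat; lra. right; field; lra. }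
rewrite K by lia. reflexivity.
Qed.

Lemma stable g eta n m : Fine Om g eta -> (0 < n)%nat -> / INR n < eta -> (0 < m)%nat -> / INR m < eta ->
  PS LL g n = PS LL g m.
Proof.
intros HF Hn Hne Hm Hme. rewrite (refine g eta n m); auto. rewrite (refine g eta m n); auto.
rewrite Nat.mul_comm. reflexivity.
Qed.

Lemma homot (g : R -> C) (Hm : R * R -> C) z0 eta n :
  (forall p1 p2, 0 <= p1 <= 0 + 1 -> 0 <= p2 <= 0 + 1 ->
    exists c r, 0 < r /\ (forall w, sq c r w -> Om w) /\
      forall q1 q2, Rabs (q1 - p1) < eta -> Rabs (q2 - p2) < eta -> sq c r (Hm (q1, q2))) ->
  (forall s, Hm (s, 0) = g s) -> (forall s, Hm (s, 1) = z0) ->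
  (forall t, Hm (0, t) = z0) -> (forall t, Hm (1, t) = z0) ->
  (0 < n)%nat -> / INR n < eta -> PS LL g n = 0.
Proof.
intros G Hb Ht Hl Hr Hn Hne.
assert (Hn' := lt_0_INR _ Hn).
set (Row j := DS LL (fun i => Hm (INR i / INR n, INR j / INR n)) n).
assert (Step : forall j, (j < n)%nat -> Row j = Row (S j)).
{ intros j Hj.
  assert (K : forall k, (k <= n)%nat ->
    DS LL (fun i => Hm (INR i / INR n, INR j / INR n)) k
      + LL (Hm (INR k / INR n, INR j / INR n)) (Hm (INR k / INR n, INR (S j) / INR n))
    = LL (Hm (INR 0 / INR n, INR j / INR n)) (Hm (INR 0 / INR n, INR (S j) / INR n))
      + DS LL (fun i => Hm (INR i / INR n, INR (S j) / INR n)) k).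
  { induction k; intros Hk. simpl. ring.
    rewrite !DS_S.
    assert (Hp1 : 0 <= INR k / INR n <= 0 + 1).
    { split. apply Rdiv_le_0_compat. apply pos_INR. lra. unfold Rdiv; apply Rmult_le_reg_r with (INR n); auto.
      rewrite Rmult_assoc, Rinv_l, Rmult_1_r, Rplus_0_l, Rmult_1_l; [apply le_INR; lia | lra]. }
    assert (Hp2 : 0 <= INR j / INR n <= 0 + 1).
    { split. apply Rdiv_le_0_compat. apply pos_INR. lra. unfold Rdiv; apply Rmult_le_reg_r with (INR n); auto.
      rewrite Rmult_assoc, Rinv_l, Rmult_1_r, Rplus_0_l, Rmult_1_l; [apply le_INR; lia | lra]. }
    destruct (G _ _ Hp1 Hp2) as [c [r [Hr0 [HO Hq]]]].
    assert (E1 : forall u, (u <= 1)%nat -> Rabs (INR (k + u) / INR n - INR k / INR n) < eta).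
    { intros u Hu. rewrite plus_INR. replace ((INR k + INR u) / INR n - INR k / INR n) with (INR u / INR n) by (field; lra).
      rewrite Rabs_pos_eq. 2:{ apply Rdiv_le_0_compat. apply pos_INR. lra. }
      apply Rle_lt_trans with (/ INR n); auto. unfold Rdiv. rewrite <- (Rmult_1_l (/ INR n)) at 2.
      apply Rmult_le_compat_r. left; apply Rinv_0_lt_compat; lra. replace 1 with (INR 1) by reflexivity. apply le_INR; lia. }
    assert (E2 : forall u, (u <= 1)%nat -> Rabs (INR (j + u) / INR n - INR j / INR n) < eta).
    { intros u Hu. rewrite plus_INR. replace ((INR j + INR u) / INR n - INR j / INR n) with (INR u / INR n) by (field; lra).
      rewrite Rabs_pos_eq. 2:{ apply Rdiv_le_0_compat. apply pos_INR. lra. }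
      apply Rle_lt_trans with (/ INR n); auto. unfold Rdiv. rewrite <- (Rmult_1_l (/ INR n)) at 2.
      apply Rmult_le_compat_r. left; apply Rinv_0_lt_compat; lra. replace 1 with (INR 1) by reflexivity. apply le_INR; lia. }
    assert (S00 : sq c r (Hm (INR k / INR n, INR j / INR n))).
    { apply Hq. rewrite <- (Nat.add_0_r k) at 1. apply E1; lia. rewrite <- (Nat.add_0_r j) at 1. apply E2; lia. }
    assert (S10 : sq c r (Hm (INR (S k) / INR n, INR j / INR n))).
    { apply Hq. rewrite <- Nat.add_1_r. apply E1; lia. rewrite <- (Nat.add_0_r j) at 1. apply E2; lia. }
    assert (S01 : sq c r (Hm (INR k / INR n, INR (S j) / INR n))).
    { apply Hq. rewrite <- (Nat.add_0_r k) at 1. apply E1; lia. rewrite <- Nat.add_1_r. apply E2; lia. }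
    assert (S11 : sq c r (Hm (INR (S k) / INR n, INR (S j) / INR n))).
    { apply Hq. rewrite <- Nat.add_1_r. apply E1; lia. rewrite <- Nat.add_1_r. apply E2; lia. }
    assert (IH := IHk ltac:(lia)).
    assert (X : LL (Hm (INR k / INR n, INR j / INR n)) (Hm (INR (S k) / INR n, INR (S j) / INR n))
      = LL (Hm (INR k / INR n, INR j / INR n)) (Hm (INR (S k) / INR n, INR j / INR n)) + LL (Hm (INR (S k) / INR n, INR j / INR n)) (Hm (INR (S k) / INR n, INR (S j) / INR n))) by (apply (coc c r); auto).
    assert (Y : LL (Hm (INR k / INR n, INR j / INR n)) (Hm (INR (S k) / INR n, INR (S j) / INR n))
      = LL (Hm (INR k / INR n, INR j / INR n)) (Hm (INR k / INR n, INR (S j) / INR n)) + LL (Hm (INR k / INR n, INR (S j) / INR n)) (Hm (INR (S k) / INR n, INR (S j) / INR n))) by (apply (coc c r); auto).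
    unfold LL in *. lra. }
  specialize (K n (Nat.le_refl n)). unfold Row.
  replace (INR n / INR n) with 1 in K by (field; lra). replace (INR 0 / INR n) with 0 in K by (simpl; field; lra).
  rewrite !Hr, !Hl in K. unfold LL in *. rewrite L_refl in K. lra. }
assert (Rall : forall j, (j <= n)%nat -> Row 0%nat = Row j).
{ induction j; intros Hj. reflexivity. rewrite IHj by lia. apply Step. lia. }
assert (R0 : Row 0%nat = PS LL g n).
{ unfold Row, PS. apply DS_ext. intros i _. replace (INR 0 / INR n) with 0 by (simpl; field; lra). apply Hb. }
assert (Rn : Row n = 0).
{ unfold Row. replace (INR n / INR n) with 1 by (field; lra).
  generalize n at 2. intros k. induction k. reflexivity. rewrite DS_S, IHk, !Ht. unfold LL. rewrite L_refl. ring. }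
rewrite <- R0, Rall with n; auto.
Qed.

End Disc.

Lemma DS_first L f k : DS L f (S k) = L (f O) (f 1%nat) + DS L (fun i => f (S i)) k.
Proof. induction k. simpl. ring. rewrite DS_S, IHk, DS_S. simpl. ring. Qed.

Lemma DS_rev L g m : (forall k, (k < m)%nat -> L (g (S k)) (g k) = - L (g k) (g (S k))) ->
  DS L (fun i => g (m - i)%nat) m = - DS L g m.
Proof.
induction m; intros H. simpl. ring.
rewrite DS_first. replace (S m - 0)%nat with (S m) by lia. replace (S m - 1)%nat with m by lia.
rewrite (DS_ext L (fun i => g (S m - S i)%nat) (fun i => g (m - i)%nat)) by (intros; f_equal; lia).
rewrite IHm by (intros; apply H; lia). rewrite DS_S, H by lia. ring.
Qed.

Lemma arch_inv eps : 0 < eps -> exists N, (0 < N)%nat /\ forall m, (N <= m)%nat -> / INR m < eps.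
Proof.
intros He. destruct (archimed (/ eps)) as [Ha _].
assert (0 < / eps) by (apply Rinv_0_lt_compat; lra).
exists (S (Z.to_nat (up (/ eps)))). split. lia. intros m Hm.
assert (INR m > / eps).
{ apply Rlt_le_trans with (INR (S (Z.to_nat (up (/ eps))))). rewrite S_INR, INR_IZR_INZ, Z2Nat.id. lra.
  apply le_IZR. lra. apply le_INR. exact Hm. }
rewrite <- (Rinv_inv eps). apply Rinv_lt_contravar. apply Rmult_lt_0_compat; lra. lra.
Qed.

Lemma Rmin_lip s t c : Rabs (Rmin s c - Rmin t c) <= Rabs (s - t).
Proof. unfold Rmin. destruct (Rle_dec s c); destruct (Rle_dec t c); unfold Rabs; repeat destruct Rcase_abs; lra. Qed.
Lemma Rmax_lip s t c : Rabs (Rmax s c - Rmax t c) <= Rabs (s - t).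
Proof. unfold Rmax. destruct (Rle_dec s c); destruct (Rle_dec t c); unfold Rabs; repeat destruct Rcase_abs; lra. Qed.

Lemma cont_lip (h : R -> R) K s : 0 < K -> (forall t, Rabs (h t - h s) <= K * Rabs (t - s)) -> continuous h s.
Proof.
intros HK Hh. apply cont_R_eps. intros eps. assert (P : 0 < eps / K) by (apply Rdiv_lt_0_compat; [apply cond_pos|lra]).
exists (mkposreal _ P). simpl. intros t Ht. eapply Rle_lt_trans. apply Hh.
apply Rmult_lt_compat_l with (r := K) in Ht; auto. replace (K * (eps / K)) with (pos eps) in Ht by (field; lra). exact Ht.
Qed.

Definition conc (g1 g2 : R -> C) (z : C) (s : R) : C :=
  Cminus (Cplus (g1 (2 * Rmin s (1/2))) (g2 (2 * Rmax s (1/2) - 1))) z.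
Definition revp (g : R -> C) (s : R) : C := g (1 - s).

Lemma conc_cont g1 g2 z : (forall s, continuous g1 s) -> (forall s, continuous g2 s) -> forall s, continuous (conc g1 g2 z) s.
Proof.
intros H1 H2 s. unfold conc.
apply (continuous_minus (fun s => Cplus (g1 (2 * Rmin s (1/2))) (g2 (2 * Rmax s (1/2) - 1))) (fun _ => z)).
2: apply continuous_const.
apply (continuous_plus (fun s => g1 (2 * Rmin s (1/2))) (fun s => g2 (2 * Rmax s (1/2) - 1))).
- apply (continuous_comp (fun s => 2 * Rmin s (1/2)) g1); auto.
  apply (cont_lip _ 2); [lra|]. intros t. replace (2 * Rmin t (1/2) - 2 * Rmin s (1/2)) with (2 * (Rmin t (1/2) - Rmin s (1/2))) by ring.
  rewrite Rabs_mult, Rabs_pos_eq by lra. apply Rmult_le_compat_l. lra. apply Rmin_lip.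
- apply (continuous_comp (fun s => 2 * Rmax s (1/2) - 1) g2); auto.
  apply (cont_lip _ 2); [lra|]. intros t. replace (2 * Rmax t (1/2) - 1 - (2 * Rmax s (1/2) - 1)) with (2 * (Rmax t (1/2) - Rmax s (1/2))) by ring.
  rewrite Rabs_mult, Rabs_pos_eq by lra. apply Rmult_le_compat_l. lra. apply Rmax_lip.
Qed.

Lemma revp_cont g : (forall s, continuous g s) -> forall s, continuous (revp g) s.
Proof.
intros H s. unfold revp. apply (continuous_comp (fun s => 1 - s) g); auto.
apply (cont_lip _ 1); [lra|]. intros t. replace (1 - t - (1 - s)) with (- (t - s)) by ring. rewrite Rabs_Ropp. lra.
Qed.

Lemma conc_l g1 g2 z s : g2 0 = z -> s <= 1/2 -> conc g1 g2 z s = g1 (2 * s).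
Proof. intros Hz Hs. unfold conc. rewrite Rmin_left, Rmax_right by lra. replace (2 * (1/2) - 1) with 0 by field.
rewrite Hz. ring. Qed.
Lemma conc_r g1 g2 z s : g1 1 = z -> 1/2 <= s -> conc g1 g2 z s = g2 (2 * s - 1).
Proof. intros Hz Hs. unfold conc. rewrite Rmin_right, Rmax_left by lra. replace (2 * (1/2)) with 1 by field.
rewrite Hz. ring. Qed.

Lemma pair_cont (f g : R -> R) s : continuous f s -> continuous g s -> continuous (fun t => ((f t, g t) : C)) s.
Proof. intros Hf Hg. pose proof (proj1 (cont_R_eps f s) Hf) as Hf1. pose proof (proj1 (cont_R_eps g s) Hg) as Hg1. clear Hf Hg. rename Hf1 into Hf. rename Hg1 into Hg. unfold continuous.
apply (proj2 (filterlim_locally _ _)). intros eps.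
destruct (Hf eps) as [d1 H1]. destruct (Hg eps) as [d2 H2].
exists (mkposreal _ (Rmin_pos _ _ (cond_pos d1) (cond_pos d2))). intros t Ht.
assert (Ht' : Rabs (t - s) < Rmin d1 d2) by exact Ht.
assert (M1 := Rmin_l d1 d2). assert (M2 := Rmin_r d1 d2).
split; simpl. apply H1; lra. apply H2; lra. Qed.

Definition seg (z w : C) (s : R) : C := (fst z + s * (fst w - fst z), snd z + s * (snd w - snd z)).

Lemma seg_cont z w s : continuous (seg z w) s.
Proof. unfold seg. apply pair_cont.
- apply (cont_lip _ (Rabs (fst w - fst z) + 1)). pose proof (Rabs_pos (fst w - fst z)); lra. intros t.
  replace (fst z + t * (fst w - fst z) - (fst z + s * (fst w - fst z))) with ((fst w - fst z) * (t - s)) by ring.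
  rewrite Rabs_mult. apply Rmult_le_compat_r. apply Rabs_pos. lra.
- apply (cont_lip _ (Rabs (snd w - snd z) + 1)). pose proof (Rabs_pos (snd w - snd z)); lra. intros t.
  replace (snd z + t * (snd w - snd z) - (snd z + s * (snd w - snd z))) with ((snd w - snd z) * (t - s)) by ring.
  rewrite Rabs_mult. apply Rmult_le_compat_r. apply Rabs_pos. lra.
Qed.

Lemma seg_sq z w r s : sq z r w -> 0 <= s <= 1 -> sq z r (seg z w s).
Proof. intros [H1 H2] Hs. unfold seg, sq in *; simpl.
replace (fst z + s * (fst w - fst z) - fst z) with (s * (fst w - fst z)) by ring.
replace (snd z + s * (snd w - snd z) - snd z) with (s * (snd w - snd z)) by ring.
rewrite !Rabs_mult, (Rabs_pos_eq s) by lra. pose proof (Rabs_pos (fst w - fst z)); pose proof (Rabs_pos (snd w - snd z)). split; nra. Qed.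

Section Exact.
Variable Om : C -> Prop.
Variables a b : C -> R.
Hypothesis Hca : forall z, Om z -> continuous a z.
Hypothesis Hcb : forall z, Om z -> continuous b z.
Hypothesis Hdb : forall x y, Om (x,y) -> ex_derive (fun u => b (u,y)) x.
Hypothesis Hcdb : forall x y, Om (x,y) -> continuity_2d_pt (fun u v => Derive (fun s => b (s,v)) u) x y.
Hypothesis Hclo : forall x y, Om (x,y) -> is_derive (fun t => a (x,t)) y (Derive (fun s => b (s,y)) x).
Hypothesis Hsimp : simply_connected Om.

Let LL := L a b.
Let coc := cocycle Om a b Hca Hcb Hdb Hcdb Hclo.

Lemma Hop : open Om.
Proof. destruct Hsimp as [[H _] _]. exact H. Qed.

Definition Val z0 z v := exists g eta, path_in Om g /\ g 0 = z0 /\ g 1 = z /\ Fine Om g eta /\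
  forall n, (0 < n)%nat -> / INR n < eta -> PS LL g n = v.

Lemma Val_intro g eta n0 z0 z v : path_in Om g -> g 0 = z0 -> g 1 = z -> Fine Om g eta ->
  (0 < n0)%nat -> / INR n0 < eta -> PS LL g n0 = v -> Val z0 z v.
Proof.
intros Hp H0 H1 HF Hn0 He Hv. exists g, eta. split; [exact Hp|]. split; [exact H0|]. split; [exact H1|]. split; [exact HF|].
intros n Hn Hne. rewrite <- Hv. apply (stable Om a b Hca Hcb Hdb Hcdb Hclo g eta); auto.
Qed.

Lemma PS_conc g1 g2 z m : (0 < m)%nat -> g2 0 = z -> g1 1 = z ->
  PS LL (conc g1 g2 z) (2 * m) = PS LL g1 m + PS LL g2 m.
Proof.
intros Hm H2 H1. assert (Hm' := lt_0_INR _ Hm). unfold PS. replace (2 * m)%nat with (m + m)%nat by lia.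
rewrite DS_add. f_equal.
- apply DS_ext. intros j Hj. apply le_INR in Hj. rewrite conc_l; auto.
  + f_equal. rewrite plus_INR. field. lra.
  + rewrite plus_INR. replace (INR j / (INR m + INR m)) with (1/2 - (INR m - INR j) / (2 * INR m)) by (field; lra).
    assert (0 <= (INR m - INR j) / (2 * INR m)) by (apply Rdiv_le_0_compat; lra). lra.
- apply DS_ext. intros j Hj. rewrite conc_r; auto.
  + f_equal. rewrite !plus_INR. field. lra.
  + rewrite !plus_INR. assert (P := pos_INR j). replace ((INR m + INR j) / (INR m + INR m)) with (1/2 + INR j / (2 * INR m)) by (field; lra).
    assert (0 <= INR j / (2 * INR m)) by (apply Rdiv_le_0_compat; lra). lra.
Qed.

Lemma antisym c r x y : (forall w, sq c r w -> Om w) -> sq c r x -> sq c r y -> LL y x = - LL x y.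
Proof. intros HO Hx Hy. assert (E := coc c r x y x HO Hx Hy Hx). unfold LL in *. rewrite L_refl in E. lra. Qed.

Lemma PS_rev g eta m : Fine Om g eta -> (0 < m)%nat -> / INR m < eta -> PS LL (revp g) m = - PS LL g m.
Proof.
intros [He HF] Hm Hme. assert (Hm' := lt_0_INR _ Hm). unfold PS, revp.
rewrite (DS_ext LL _ (fun i => (fun k => g (INR k / INR m)) (m - i)%nat)).
- apply (DS_rev LL (fun k => g (INR k / INR m)) m). intros k Hk.
  assert (Hp : 0 <= INR k / INR m <= 1).
  { split. apply Rdiv_le_0_compat. apply pos_INR. lra. unfold Rdiv; apply Rmult_le_reg_r with (INR m); auto.
    rewrite Rmult_assoc, Rinv_l, Rmult_1_r, Rmult_1_l; [apply le_INR; lia | lra]. }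
  destruct (HF _ Hp) as [c [r [Hr [HO Hq]]]].
  apply (antisym c r); auto.
  + apply Hq. rewrite Rminus_diag, Rabs_R0. lra.
  + apply Hq. rewrite S_INR. replace ((INR k + 1) / INR m - INR k / INR m) with (/ INR m) by (field; lra).
    rewrite Rabs_pos_eq. lra. left; apply Rinv_0_lt_compat; lra.
- intros j Hj. f_equal. rewrite minus_INR by lia. field. lra.
Qed.

Lemma Val_unique z0 z v1 v2 : Val z0 z v1 -> Val z0 z v2 -> v1 = v2.
Proof.
intros [g1 [e1 [[Hc1 Hp1] [H10 [H11 [HF1 HV1]]]]]] [g2 [e2 [[Hc2 Hp2] [H20 [H21 [HF2 HV2]]]]]].
set (lam := conc g1 (revp g2) z).
assert (Hlc : forall s, continuous lam s). { apply conc_cont; auto. apply revp_cont; auto. }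
assert (Rv0 : revp g2 0 = z). { unfold revp. rewrite Rminus_0_r. auto. }
assert (Hlp : path_in Om lam).
{ split; auto. intros s Hs. unfold unit_interval in Hs. destruct (Rle_dec s (1/2)).
  - unfold lam. rewrite conc_l; auto. apply Hp1. unfold unit_interval. lra.
  - unfold lam. rewrite conc_r by (auto; lra). unfold revp. apply Hp2. unfold unit_interval. lra. }
assert (L0 : lam 0 = z0). { unfold lam. rewrite conc_l by (auto; lra). rewrite Rmult_0_r. auto. }
assert (L1 : lam 1 = z0). { unfold lam. rewrite conc_r by (auto; lra). unfold revp. replace (1 - (2 * 1 - 1)) with 0 by ring. auto. }
destruct Hsimp as [_ Hs]. destruct (Hs lam Hlp (eq_trans L0 (eq_sym L1))) as [Hm [HHc [HHO [HH0 [HH1 [HHl HHr]]]]]].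
destruct (leb_main Om Hm Hop HHc) as [eh [Heh G]].
{ intros s t Hs' Ht'. apply HHO; unfold unit_interval; lra. }
destruct (arch_inv (Rmin eh (Rmin e1 e2))) as [N [HN HN']].
{ destruct HF1, HF2. repeat apply Rmin_pos; lra. }
assert (M1 := Rmin_l eh (Rmin e1 e2)). assert (M2 := Rmin_r eh (Rmin e1 e2)).
assert (M3 := Rmin_l e1 e2). assert (M4 := Rmin_r e1 e2).
assert (HNi := HN' N (Nat.le_refl N)).
assert (HN2 : / INR (2 * N) < eh).
{ apply Rle_lt_trans with (/ INR N). apply Rinv_le_contravar. apply lt_0_INR; lia. apply le_INR; lia. lra. }
assert (Z := homot Om a b Hca Hcb Hdb Hcdb Hclo lam Hm (lam 0) eh (2 * N) G HH0 HH1 HHl HHr ltac:(lia) HN2).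
change (L a b) with LL in Z. unfold lam in Z.
rewrite PS_conc in Z by (auto; lia). rewrite (PS_rev g2 e2) in Z by (auto; lra).
rewrite (HV1 N) in Z by (auto; lra). rewrite (HV2 N) in Z by (auto; lra). lra.
Qed.


Lemma path_fine g : path_in Om g -> exists eta, Fine Om g eta.
Proof. intros [Hc Hp]. apply Fine_exists; auto. apply Hop. Qed.

Lemma Val_exists z0 z g : path_in Om g -> g 0 = z0 -> g 1 = z -> exists v, Val z0 z v.
Proof.
intros Hp H0 H1. destruct (path_fine g Hp) as [eta HF].
destruct (arch_inv eta) as [N [HN HN']]. apply HF.
exists (PS LL g N). apply (Val_intro g eta N); auto.
Qed.

Definition Mf z0 z := epsilon (inhabits 0) (fun v => Val z0 z v).

Lemma Mf_spec z0 z : Om z0 -> Om z -> Val z0 z (Mf z0 z).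
Proof.
intros H0 H. destruct Hsimp as [[_ [_ Hpc]] _]. destruct (Hpc z0 z H0 H) as [g [Hg [G0 G1]]].
unfold Mf. apply epsilon_spec. eapply Val_exists; eauto.
Qed.

Lemma seg0 z w : seg z w 0 = z.
Proof. unfold seg. rewrite !Rmult_0_l, !Rplus_0_r. destruct z; reflexivity. Qed.
Lemma seg1 z w : seg z w 1 = w.
Proof. unfold seg. destruct z; destruct w; simpl. f_equal; ring. Qed.

Lemma Mf_local z0 z : Om z0 -> Om z -> exists r, 0 < r /\ (forall w, sq z r w -> Om w) /\
  forall w, sq z r w -> Mf z0 w = Mf z0 z + LL z w.
Proof.
intros H0 Hz. destruct (Hop z Hz) as [r Hr].
assert (HO : forall w, sq z r w -> Om w) by (intros w Hw; apply Hr; exact Hw).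
exists r. split. apply cond_pos. split. exact HO.
intros w Hw. apply (Val_unique z0 w). apply Mf_spec; auto.
destruct (Mf_spec z0 z H0 Hz) as [g [eta [[Hgc Hgp] [G0 [G1 [HF HV]]]]]].
set (g2 := conc g (seg z w) z).
assert (Hp2 : path_in Om g2).
{ split. apply conc_cont; auto. apply seg_cont.
  intros s Hs. unfold unit_interval in Hs. destruct (Rle_dec s (1/2)).
  - unfold g2. rewrite conc_l; auto. apply Hgp. unfold unit_interval. lra. apply seg0.
  - unfold g2. rewrite conc_r by (auto; lra). apply HO. apply seg_sq; auto. lra. }
destruct (path_fine g2 Hp2) as [eta2 HF2].
destruct (arch_inv (Rmin eta eta2)) as [N [HN HN']]. { destruct HF, HF2. apply Rmin_pos; lra. }
assert (M1 := Rmin_l eta eta2). assert (M2 := Rmin_r eta eta2). assert (HNi := HN' N (Nat.le_refl N)).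
assert (HN2 : / INR (2 * N) < eta2).
{ apply Rle_lt_trans with (/ INR N). apply Rinv_le_contravar. apply lt_0_INR; lia. apply le_INR; lia. lra. }
apply (Val_intro g2 eta2 (2 * N)); auto.
- unfold g2. rewrite conc_l; auto. rewrite Rmult_0_r. auto. apply seg0. lra.
- unfold g2. rewrite conc_r by (auto; lra). replace (2 * 1 - 1) with 1 by ring. apply seg1.
- lia.
- unfold g2. rewrite PS_conc; auto. 2: apply seg0. rewrite (HV N) by (auto; lra). f_equal.
  assert (HN0 := lt_0_INR _ HN). unfold PS. rewrite (tele Om a b Hca Hcb Hdb Hcdb Hclo z r); auto.
  + replace (INR 0 / INR N) with 0 by (simpl; field; lra). replace (INR N / INR N) with 1 by (field; lra).
    rewrite seg0, seg1. reflexivity.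
  + intros j Hj. apply seg_sq; auto. split. apply Rdiv_le_0_compat. apply pos_INR. lra.
    unfold Rdiv; apply Rmult_le_reg_r with (INR N); auto.
    rewrite Rmult_assoc, Rinv_l, Rmult_1_r, Rmult_1_l; [apply le_INR; lia | lra].
Qed.

End Exact.

Theorem exact_form (Om : C -> Prop) (a b : C -> R) :
  (forall z, Om z -> continuous a z) -> (forall z, Om z -> continuous b z) ->
  (forall x y, Om (x,y) -> ex_derive (fun u => b (u,y)) x) ->
  (forall x y, Om (x,y) -> continuity_2d_pt (fun u v => Derive (fun s => b (s,v)) u) x y) ->
  (forall x y, Om (x,y) -> is_derive (fun t => a (x,t)) y (Derive (fun s => b (s,y)) x)) ->
  simply_connected Om ->
  exists M : C -> R, forall z, Om z ->
    continuous M z /\ is_derive (fun s => M (s, snd z)) (fst z) (a z) /\ is_derive (fun s => M (fst z, s)) (snd z) (b z).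
Proof.
intros Hca Hcb Hdb Hcdb Hclo Hs.
destruct Hs as [[Hop0 [[z0 Hz0] Hpc]] Hs'].
assert (Hsimp : simply_connected Om) by (split; [split; [exact Hop0|split; [exists z0; exact Hz0|exact Hpc]]|exact Hs']).
exists (Mf Om a b z0). intros z Hz.
destruct (Mf_local Om a b Hca Hcb Hdb Hcdb Hclo Hsimp z0 z Hz0 Hz) as [r [Hr [HO Hloc]]].
set (M := Mf Om a b z0) in *.
assert (Szz : sq z r z) by (split; rewrite Rminus_diag, Rabs_R0; lra).
split; [|split].
- destruct (proj1 (cont_C a z) (Hca z Hz) (mkposreal 1 Rlt_0_1)) as [d1 Hd1].
  destruct (proj1 (cont_C b z) (Hcb z Hz) (mkposreal 1 Rlt_0_1)) as [d2 Hd2].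
  set (r' := Rmin r (Rmin d1 d2)).
  assert (Hr' : 0 < r') by (unfold r'; repeat apply Rmin_pos; try apply cond_pos; lra).
  assert (R1 := Rmin_l r (Rmin d1 d2)). assert (R2 := Rmin_r r (Rmin d1 d2)).
  assert (R3 := Rmin_l d1 d2). assert (R4 := Rmin_r d1 d2). fold r' in R1, R2.
  assert (Sub : forall w, sq z r' w -> sq z r w) by (intros w [W1 W2]; split; lra).
  apply (cont_from_partials M a b z r' (Rabs (a z) + Rabs (b z) + 1)); auto.
  + intros w Hw. split.
    * apply (is_derive_ext_loc (fun s => M z + L a b z (s, snd w))).
      { apply (filter_imp (fun s => Rabs (s - fst z) < r)). intros s Hs0. symmetry. apply Hloc. split; simpl; auto. apply (Sub w Hw).
        apply loc_abs. apply (Sub w Hw). }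
      replace (a w) with (0 + a w) by ring. apply (is_derive_plus (fun _ => M z) (fun s => L a b z (s, snd w))).
      apply (is_derive_const (K:=R_AbsRing) (V:=R_NormedModule)). apply (L_du Om a b Hca Hcb Hdb Hcdb Hclo z r); auto.
    * apply (is_derive_ext_loc (fun s => M z + L a b z (fst w, s))).
      { apply (filter_imp (fun s => Rabs (s - snd z) < r)). intros s Hs0. symmetry. apply Hloc. split; simpl; auto. apply (Sub w Hw).
        apply loc_abs. apply (Sub w Hw). }
      replace (b w) with (0 + b w) by ring. apply (is_derive_plus (fun _ => M z) (fun s => L a b z (fst w, s))).
      apply (is_derive_const (K:=R_AbsRing) (V:=R_NormedModule)). apply (L_dv Om a b Hcb z r); auto.
  + intros [w1 w2] [W1 W2]. simpl in W1, W2. destruct z as [z1 z2]. simpl in *.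
    assert (A1 := Hd1 w1 w2 ltac:(lra) ltac:(lra)). assert (A2 := Hd2 w1 w2 ltac:(lra) ltac:(lra)). simpl in A1, A2.
    pose proof (Rabs_pos (a (z1,z2))). pose proof (Rabs_pos (b (z1,z2))).
    assert (T1 := Rabs_triang_inv (a (w1,w2)) (a (z1,z2))). assert (T2 := Rabs_triang_inv (b (w1,w2)) (b (z1,z2))).
    split; lra.
- apply (is_derive_ext_loc (fun s => M z + L a b z (s, snd z))).
  { apply (filter_imp (fun s => Rabs (s - fst z) < r)). intros s Hs0. symmetry. apply Hloc. split; simpl; auto. apply Szz.
    apply loc_abs. apply Szz. }
  replace (a z) with (0 + a z) by ring. apply (is_derive_plus (fun _ => M z) (fun s => L a b z (s, snd z))).
  apply (is_derive_const (K:=R_AbsRing) (V:=R_NormedModule)). apply (L_du Om a b Hca Hcb Hdb Hcdb Hclo z r); auto.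
- apply (is_derive_ext_loc (fun s => M z + L a b z (fst z, s))).
  { apply (filter_imp (fun s => Rabs (s - snd z) < r)). intros s Hs0. symmetry. apply Hloc. split; simpl; auto. apply Szz.
    apply loc_abs. apply Szz. }
  replace (b z) with (0 + b z) by ring. apply (is_derive_plus (fun _ => M z) (fun s => L a b z (fst z, s))).
  apply (is_derive_const (K:=R_AbsRing) (V:=R_NormedModule)). apply (L_dv Om a b Hcb z r); auto.
Qed.


Lemma Derive_shift (h : R -> R) x : Derive (fun t => h (x + t)) 0 = Derive h x.
Proof. unfold Derive. f_equal. apply Lim_ext. intros e. rewrite Rplus_0_l, Rplus_0_r. reflexivity. Qed.

Lemma ex_derive_shift (h : R -> R) x : ex_derive (fun t => h (x + t)) 0 <-> ex_derive h x.
Proof. split; intros H.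
- apply (ex_derive_ext (fun s => h (x + (s - x)))). intros s. f_equal. ring.
  apply (ex_derive_comp (fun t => h (x + t)) (fun s => s - x)). replace (x - x) with 0 by ring. exact H.
  auto_derive; auto.
- apply (ex_derive_comp h (fun t => x + t)). rewrite Rplus_0_r. exact H.
  auto_derive; auto.
Qed.

Definition exU (f : C -> R) z := ex_derive (fun s => f (s, snd z)) (fst z).
Definition exV (f : C -> R) z := ex_derive (fun s => f (fst z, s)) (snd z).

Lemma pu_eq f z : pu f z = Derive (fun s => f (s, snd z)) (fst z).
Proof. unfold pu. apply (Derive_shift (fun s => f (s, snd z))). Qed.
Lemma pv_eq f z : pv f z = Derive (fun s => f (fst z, s)) (snd z).
Proof. unfold pv. apply (Derive_shift (fun s => f (fst z, s))). Qed.
Lemma exu_eq f z : ex_derive (fun t => f (fst z + t, snd z)) 0 <-> exU f z.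
Proof. apply (ex_derive_shift (fun s => f (s, snd z))). Qed.
Lemma exv_eq f z : ex_derive (fun t => f (fst z, snd z + t)) 0 <-> exV f z.
Proof. apply (ex_derive_shift (fun s => f (fst z, s))). Qed.

Lemma pu_plus f g z : exU f z -> exU g z -> pu (fun w => f w + g w) z = pu f z + pu g z.
Proof. intros. rewrite !pu_eq. apply (Derive_plus (fun s => f (s, snd z)) (fun s => g (s, snd z))); auto. Qed.
Lemma pv_plus f g z : exV f z -> exV g z -> pv (fun w => f w + g w) z = pv f z + pv g z.
Proof. intros. rewrite !pv_eq. apply (Derive_plus (fun s => f (fst z, s)) (fun s => g (fst z, s))); auto. Qed.
Lemma pu_mult f g z : exU f z -> exU g z -> pu (fun w => f w * g w) z = pu f z * g z + f z * pu g z.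
Proof. intros. rewrite !pu_eq. rewrite (Derive_mult (fun s => f (s, snd z)) (fun s => g (s, snd z))); auto. destruct z; reflexivity. Qed.
Lemma pv_mult f g z : exV f z -> exV g z -> pv (fun w => f w * g w) z = pv f z * g z + f z * pv g z.
Proof. intros. rewrite !pv_eq. rewrite (Derive_mult (fun s => f (fst z, s)) (fun s => g (fst z, s))); auto. destruct z; reflexivity. Qed.
Lemma pu_inv f z : exU f z -> f z <> 0 -> pu (fun w => / f w) z = - pu f z / (f z) ^ 2.
Proof. intros. rewrite !pu_eq. rewrite (Derive_inv (fun s => f (s, snd z))); auto. destruct z; reflexivity. destruct z; auto. Qed.
Lemma pv_inv f z : exV f z -> f z <> 0 -> pv (fun w => / f w) z = - pv f z / (f z) ^ 2.
Proof. intros. rewrite !pv_eq. rewrite (Derive_inv (fun s => f (fst z, s))); auto. destruct z; reflexivity. destruct z; auto. Qed.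
Lemma pu_const c z : pu (fun _ => c) z = 0.
Proof. rewrite pu_eq. apply Derive_const. Qed.
Lemma pv_const c z : pv (fun _ => c) z = 0.
Proof. rewrite pv_eq. apply Derive_const. Qed.
Lemma pu_scal c f z : pu (fun w => c * f w) z = c * pu f z.
Proof. rewrite !pu_eq. apply (Derive_scal (fun s => f (s, snd z))). Qed.
Lemma pv_scal c f z : pv (fun w => c * f w) z = c * pv f z.
Proof. rewrite !pv_eq. apply (Derive_scal (fun s => f (fst z, s))). Qed.

Lemma exU_plus f g z : exU f z -> exU g z -> exU (fun w => f w + g w) z.
Proof. intros. apply (ex_derive_plus (fun s => f (s, snd z)) (fun s => g (s, snd z))); auto. Qed.
Lemma exV_plus f g z : exV f z -> exV g z -> exV (fun w => f w + g w) z.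
Proof. intros. apply (ex_derive_plus (fun s => f (fst z, s)) (fun s => g (fst z, s))); auto. Qed.
Lemma exU_mult f g z : exU f z -> exU g z -> exU (fun w => f w * g w) z.
Proof. intros. apply (ex_derive_mult (fun s => f (s, snd z)) (fun s => g (s, snd z))); auto. Qed.
Lemma exV_mult f g z : exV f z -> exV g z -> exV (fun w => f w * g w) z.
Proof. intros. apply (ex_derive_mult (fun s => f (fst z, s)) (fun s => g (fst z, s))); auto. Qed.
Lemma exU_inv f z : exU f z -> f z <> 0 -> exU (fun w => / f w) z.
Proof. intros. apply (ex_derive_inv (fun s => f (s, snd z))); auto. destruct z; auto. Qed.
Lemma exV_inv f z : exV f z -> f z <> 0 -> exV (fun w => / f w) z.
Proof. intros. apply (ex_derive_inv (fun s => f (fst z, s))); auto. destruct z; auto. Qed.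
Lemma exU_const c z : exU (fun _ => c) z.
Proof. unfold exU, exV. auto_derive; auto. Qed.
Lemma exV_const c z : exV (fun _ => c) z.
Proof. unfold exU, exV. auto_derive; auto. Qed.

Lemma cC_plus (f g : C -> R) z : continuous f z -> continuous g z -> continuous (fun w => f w + g w) z.
Proof. intros. apply (continuous_plus f g); auto. Qed.
Lemma cC_mult (f g : C -> R) z : continuous f z -> continuous g z -> continuous (fun w => f w * g w) z.
Proof. intros. apply (continuous_mult f g); auto. Qed.
Lemma cC_inv (f : C -> R) z : continuous f z -> f z <> 0 -> continuous (fun w => / f w) z.
Proof. intros. apply (continuous_comp f (fun x => / x)); auto. apply continuous_Rinv; auto. Qed.
Lemma cC_const (c : R) (z : C) : continuous (fun _ : C => c) z.
Proof. apply continuous_const. Qed.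

Lemma loc_sq (Om : C -> Prop) z : open Om -> Om z -> exists r, 0 < r /\ forall w, sq z r w -> Om w.
Proof. intros Hop Hz. destruct (Hop z Hz) as [r Hr]. exists r. split. apply cond_pos. intros w Hw. apply Hr. exact Hw. Qed.

Section Loc.
Variable Om : C -> Prop.
Hypothesis Hop : open Om.

Lemma locU (f g : C -> R) z : (forall w, Om w -> f w = g w) -> Om z -> locally (fst z) (fun s => f (s, snd z) = g (s, snd z)).
Proof. intros H Hz. destruct (loc_sq Om z Hop Hz) as [r [Hr HO]]. apply (filter_imp (fun s => Rabs (s - fst z) < r)).
intros s Hs. apply H, HO. split; simpl; auto. rewrite Rminus_diag, Rabs_R0. auto. apply loc_abs. rewrite Rminus_diag, Rabs_R0. auto. Qed.
Lemma locV (f g : C -> R) z : (forall w, Om w -> f w = g w) -> Om z -> locally (snd z) (fun s => f (fst z, s) = g (fst z, s)).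
Proof. intros H Hz. destruct (loc_sq Om z Hop Hz) as [r [Hr HO]]. apply (filter_imp (fun s => Rabs (s - snd z) < r)).
intros s Hs. apply H, HO. split; simpl; auto. rewrite Rminus_diag, Rabs_R0. auto. apply loc_abs. rewrite Rminus_diag, Rabs_R0. auto. Qed.

Lemma pu_ext (f g : C -> R) z : (forall w, Om w -> f w = g w) -> Om z -> pu f z = pu g z.
Proof. intros H Hz. rewrite !pu_eq. apply Derive_ext_loc. apply locU; auto. Qed.
Lemma pv_ext (f g : C -> R) z : (forall w, Om w -> f w = g w) -> Om z -> pv f z = pv g z.
Proof. intros H Hz. rewrite !pv_eq. apply Derive_ext_loc. apply locV; auto. Qed.
Lemma exU_ext (f g : C -> R) z : (forall w, Om w -> f w = g w) -> Om z -> exU f z -> exU g z.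
Proof. intros H Hz Hf. eapply ex_derive_ext_loc; [|exact Hf]. apply locU; auto. Qed.
Lemma exV_ext (f g : C -> R) z : (forall w, Om w -> f w = g w) -> Om z -> exV f z -> exV g z.
Proof. intros H Hz Hf. eapply ex_derive_ext_loc; [|exact Hf]. apply locV; auto. Qed.
Lemma cont_ext (f g : C -> R) z : (forall w, Om w -> f w = g w) -> Om z -> continuous f z -> continuous g z.
Proof. intros H Hz Hf. apply (continuous_ext_loc g f); auto. apply (filter_imp Om). intros; apply H; auto. apply Hop; auto. Qed.

Lemma C1_ext f g : (forall w, Om w -> f w = g w) -> C1_on Om f -> C1_on Om g.
Proof.
intros H Hf z Hz. destruct (Hf z Hz) as [H1 [H2 [H3 [H4 H5]]]]. repeat split.
- eapply cont_ext; eauto.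
- apply exu_eq. apply exu_eq in H2. eapply exU_ext; eauto.
- apply exv_eq. apply exv_eq in H3. eapply exV_ext; eauto.
- apply (cont_ext (pu f)); auto. intros w Hw. apply pu_ext; auto.
- apply (cont_ext (pv f)); auto. intros w Hw. apply pv_ext; auto.
Qed.

Lemma C1_exU f z : C1_on Om f -> Om z -> exU f z.
Proof. intros Hf Hz. apply exu_eq. apply (Hf z Hz). Qed.
Lemma C1_exV f z : C1_on Om f -> Om z -> exV f z.
Proof. intros Hf Hz. apply exv_eq. apply (Hf z Hz). Qed.
Lemma C1_cont f z : C1_on Om f -> Om z -> continuous f z.
Proof. intros Hf Hz. apply (Hf z Hz). Qed.
Lemma C1_cpu f z : C1_on Om f -> Om z -> continuous (pu f) z.
Proof. intros Hf Hz. apply (Hf z Hz). Qed.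
Lemma C1_cpv f z : C1_on Om f -> Om z -> continuous (pv f) z.
Proof. intros Hf Hz. apply (Hf z Hz). Qed.

Lemma C1_intro f : (forall z, Om z -> continuous f z) -> (forall z, Om z -> exU f z) -> (forall z, Om z -> exV f z) ->
  (forall z, Om z -> continuous (pu f) z) -> (forall z, Om z -> continuous (pv f) z) -> C1_on Om f.
Proof. intros H1 H2 H3 H4 H5 z Hz. repeat split; auto. apply exu_eq; auto. apply exv_eq; auto. Qed.

Lemma C1_const c : C1_on Om (fun _ => c).
Proof. apply C1_intro; intros z Hz. apply cC_const. apply exU_const. apply exV_const.
- apply (continuous_ext (fun _ => 0)). intros; symmetry; apply pu_const. apply cC_const.
- apply (continuous_ext (fun _ => 0)). intros; symmetry; apply pv_const. apply cC_const. Qed.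

Lemma C1_plus f g : C1_on Om f -> C1_on Om g -> C1_on Om (fun w => f w + g w).
Proof. intros Hf Hg. apply C1_intro; intros z Hz.
- apply cC_plus; apply C1_cont; auto.
- apply exU_plus; apply C1_exU; auto.
- apply exV_plus; apply C1_exV; auto.
- apply (cont_ext (fun w => pu f w + pu g w)); auto. intros w Hw. symmetry; apply pu_plus; apply C1_exU; auto.
  apply cC_plus; apply C1_cpu; auto.
- apply (cont_ext (fun w => pv f w + pv g w)); auto. intros w Hw. symmetry; apply pv_plus; apply C1_exV; auto.
  apply cC_plus; apply C1_cpv; auto.
Qed.

Lemma C1_mult f g : C1_on Om f -> C1_on Om g -> C1_on Om (fun w => f w * g w).
Proof. intros Hf Hg. apply C1_intro; intros z Hz.
- apply cC_mult; apply C1_cont; auto.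
- apply exU_mult; apply C1_exU; auto.
- apply exV_mult; apply C1_exV; auto.
- apply (cont_ext (fun w => pu f w * g w + f w * pu g w)); auto. intros w Hw. symmetry; apply pu_mult; apply C1_exU; auto.
  apply cC_plus; apply cC_mult; auto using C1_cpu, C1_cont.
- apply (cont_ext (fun w => pv f w * g w + f w * pv g w)); auto. intros w Hw. symmetry; apply pv_mult; apply C1_exV; auto.
  apply cC_plus; apply cC_mult; auto using C1_cpv, C1_cont.
Qed.

Lemma C1_inv f : C1_on Om f -> (forall w, Om w -> f w <> 0) -> C1_on Om (fun w => / f w).
Proof. intros Hf Hn. apply C1_intro; intros z Hz.
- apply cC_inv; auto using C1_cont.
- apply exU_inv; auto using C1_exU.
- apply exV_inv; auto using C1_exV.
- apply (cont_ext (fun w => (-1) * pu f w * (/ f w * / f w))); auto. intros w Hw. rewrite pu_inv; auto using C1_exU.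
  specialize (Hn w Hw). field. auto.
  apply cC_mult. apply cC_mult. apply cC_const. auto using C1_cpu. apply cC_mult; apply cC_inv; auto using C1_cont.
- apply (cont_ext (fun w => (-1) * pv f w * (/ f w * / f w))); auto. intros w Hw. rewrite pv_inv; auto using C1_exV.
  specialize (Hn w Hw). field. auto.
  apply cC_mult. apply cC_mult. apply cC_const. auto using C1_cpv. apply cC_mult; apply cC_inv; auto using C1_cont.
Qed.

Lemma C2_ext f g : (forall w, Om w -> f w = g w) -> C2_on Om f -> C2_on Om g.
Proof. intros H [H1 [H2 H3]]. split; [|split].
- eapply C1_ext; eauto.
- apply (C1_ext (pu f)); auto. intros; apply pu_ext; auto.
- apply (C1_ext (pv f)); auto. intros; apply pv_ext; auto.
Qed.

Lemma C2_C1 f : C2_on Om f -> C1_on Om f.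
Proof. intros [H _]; exact H. Qed.
Lemma C2_pu f : C2_on Om f -> C1_on Om (pu f).
Proof. intros [_ [H _]]; exact H. Qed.
Lemma C2_pv f : C2_on Om f -> C1_on Om (pv f).
Proof. intros [_ [_ H]]; exact H. Qed.

Lemma C2_const c : C2_on Om (fun _ => c).
Proof. split; [|split]. apply C1_const.
- apply (C1_ext (fun _ => 0)). intros; symmetry; apply pu_const. apply C1_const.
- apply (C1_ext (fun _ => 0)). intros; symmetry; apply pv_const. apply C1_const. Qed.

Lemma C2_plus f g : C2_on Om f -> C2_on Om g -> C2_on Om (fun w => f w + g w).
Proof. intros Hf Hg. split; [|split].
- apply C1_plus; apply C2_C1; auto.
- apply (C1_ext (fun w => pu f w + pu g w)). intros w Hw. symmetry; apply pu_plus; apply C1_exU; auto using C2_C1.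
  apply C1_plus; apply C2_pu; auto.
- apply (C1_ext (fun w => pv f w + pv g w)). intros w Hw. symmetry; apply pv_plus; apply C1_exV; auto using C2_C1.
  apply C1_plus; apply C2_pv; auto.
Qed.

Lemma C2_mult f g : C2_on Om f -> C2_on Om g -> C2_on Om (fun w => f w * g w).
Proof. intros Hf Hg. split; [|split].
- apply C1_mult; apply C2_C1; auto.
- apply (C1_ext (fun w => pu f w * g w + f w * pu g w)). intros w Hw. symmetry; apply pu_mult; apply C1_exU; auto using C2_C1.
  apply C1_plus; apply C1_mult; auto using C2_pu, C2_C1.
- apply (C1_ext (fun w => pv f w * g w + f w * pv g w)). intros w Hw. symmetry; apply pv_mult; apply C1_exV; auto using C2_C1.
  apply C1_plus; apply C1_mult; auto using C2_pv, C2_C1.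
Qed.

Lemma C2_inv f : C2_on Om f -> (forall w, Om w -> f w <> 0) -> C2_on Om (fun w => / f w).
Proof. intros Hf Hn. split; [|split].
- apply C1_inv; auto using C2_C1.
- apply (C1_ext (fun w => (-1) * pu f w * (/ f w * / f w))). intros w Hw. rewrite pu_inv; auto using C1_exU, C2_C1.
  specialize (Hn w Hw). field. auto.
  apply C1_mult. apply C1_mult. apply C1_const. auto using C2_pu. apply C1_mult; apply C1_inv; auto using C2_C1.
- apply (C1_ext (fun w => (-1) * pv f w * (/ f w * / f w))). intros w Hw. rewrite pv_inv; auto using C1_exV, C2_C1.
  specialize (Hn w Hw). field. auto.
  apply C1_mult. apply C1_mult. apply C1_const. auto using C2_pv. apply C1_mult; apply C1_inv; auto using C2_C1.
Qed.

End Loc.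

Lemma puF f : pu f = fun z => Derive (fun s => f (s, snd z)) (fst z).
Proof. apply functional_extensionality. intros z. apply pu_eq. Qed.
Lemma pvF f : pv f = fun z => Derive (fun s => f (fst z, s)) (snd z).
Proof. apply functional_extensionality. intros z. apply pv_eq. Qed.

Lemma schwarz Om f z : open Om -> C2_on Om f -> Om z -> pu (pv f) z = pv (pu f) z.
Proof.
intros Hop Hf Hz.
assert (C1u := C2_pu Om f Hf). assert (C1v := C2_pv Om f Hf). assert (C1f := C2_C1 Om f Hf).
assert (Cuv := C1_cpu Om _ z C1v Hz). assert (Cvu := C1_cpv Om _ z C1u Hz).
apply cont_C in Cuv. apply cont_C in Cvu.
destruct (loc_sq Om z Hop Hz) as [r [Hr HO]].
rewrite !puF, !pvF in *. destruct z as [z1 z2]. simpl in *.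
apply (Schwarz (fun x y => f (x, y))).
- exists (mkposreal r Hr). intros u v Hu Hv. simpl in Hu, Hv.
  assert (Hw : Om (u, v)) by (apply HO; split; simpl; auto).
  repeat split.
  + apply (C1_exU Om f (u,v) C1f Hw).
  + apply (C1_exV Om f (u,v) C1f Hw).
  + assert (E := C1_exU Om _ (u,v) C1v Hw). unfold exU in E. simpl in E. exact E.
  + assert (E := C1_exV Om _ (u,v) C1u Hw). unfold exV in E. simpl in E. exact E.
- exact Cuv.
- exact Cvu.
Qed.

Ltac cexp := unfold dz, dzb, cpu, cpv, Cminus, Cplus, Copp, Cmult, Cinv, Ci, RtoC; simpl.

Lemma pu_Im_cR f z : pu (fun w => Im (cR f w)) z = 0.
Proof. apply (pu_const 0). Qed.
Lemma pv_Im_cR f z : pv (fun w => Im (cR f w)) z = 0.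
Proof. apply (pv_const 0). Qed.

Lemma dzR_eq f z : dzR f z = (pu f z / 2, - pv f z / 2).
Proof.
unfold dzR. cexp. change (pu (fun w => f w) z) with (pu f z). change (pv (fun w => f w) z) with (pv f z).
rewrite (pu_const 0), (pv_const 0). apply injective_projections; simpl; field.
Qed.

Lemma dz_eq F z : dz F z = ((pu (fun w => Re (F w)) z + pv (fun w => Im (F w)) z) / 2,
  (pu (fun w => Im (F w)) z - pv (fun w => Re (F w)) z) / 2).
Proof. cexp. apply injective_projections; simpl; field. Qed.
Lemma dzb_eq F z : dzb F z = ((pu (fun w => Re (F w)) z - pv (fun w => Im (F w)) z) / 2,
  (pu (fun w => Im (F w)) z + pv (fun w => Re (F w)) z) / 2).
Proof. cexp. apply injective_projections; simpl; field. Qed.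

Lemma half_pu f z : pu (fun w => f w / 2) z = pu f z / 2.
Proof. rewrite (puF (fun w => f w / 2)). rewrite (Derive_ext _ (fun s => / 2 * f (s, snd z))).
rewrite Derive_scal, pu_eq. field. intros; field. Qed.
Lemma half_pv f z : pv (fun w => f w / 2) z = pv f z / 2.
Proof. rewrite (pvF (fun w => f w / 2)). rewrite (Derive_ext _ (fun s => / 2 * f (fst z, s))).
rewrite Derive_scal, pv_eq. field. intros; field. Qed.

Lemma dzzbR_eq f z : dzzbR f z = ((pu (pu f) z + pv (pv f) z) / 4, (pu (pv f) z - pv (pu f) z) / 4).
Proof.
unfold dzzbR. rewrite dz_eq.
assert (E1 : (fun w => Re (dzb (cR f) w)) = fun w => pu f w / 2).
{ apply functional_extensionality. intros w. rewrite dzb_eq. simpl. rewrite (pv_const 0). change (pu (fun w0 => f w0) w) with (pu f w). field. }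
assert (E2 : (fun w => Im (dzb (cR f) w)) = fun w => pv f w / 2).
{ apply functional_extensionality. intros w. rewrite dzb_eq. simpl. rewrite (pu_const 0). change (pv (fun w0 => f w0) w) with (pv f w). field. }
rewrite E1, E2, !half_pu, !half_pv. apply injective_projections; simpl; field.
Qed.

Lemma pu_opp f z : pu (fun w => - f w) z = - pu f z.
Proof. rewrite !pu_eq. apply (Derive_opp (fun s => f (s, snd z))). Qed.
Lemma pv_opp f z : pv (fun w => - f w) z = - pv f z.
Proof. rewrite !pv_eq. apply (Derive_opp (fun s => f (fst z, s))). Qed.
Lemma exU_opp f z : exU f z -> exU (fun w => - f w) z.
Proof. intros H. apply (ex_derive_opp (fun s => f (s, snd z))). exact H. Qed.
Lemma exV_opp f z : exV f z -> exV (fun w => - f w) z.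
Proof. intros H. apply (ex_derive_opp (fun s => f (fst z, s))). exact H. Qed.
Lemma pow2_fun (f : C -> R) : (fun w => f w ^ 2) = (fun w => f w * f w).
Proof. apply functional_extensionality; intros; ring. Qed.
Lemma pu_pow2 f z : exU f z -> pu (fun w => f w ^ 2) z = 2 * f z * pu f z.
Proof. intros H. rewrite pow2_fun, pu_mult; auto. ring. Qed.
Lemma pv_pow2 f z : exV f z -> pv (fun w => f w ^ 2) z = 2 * f z * pv f z.
Proof. intros H. rewrite pow2_fun, pv_mult; auto. ring. Qed.
Lemma exU_pow2 f z : exU f z -> exU (fun w => f w ^ 2) z.
Proof. intros H. rewrite pow2_fun. apply exU_mult; auto. Qed.
Lemma exV_pow2 f z : exV f z -> exV (fun w => f w ^ 2) z.
Proof. intros H. rewrite pow2_fun. apply exV_mult; auto. Qed.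
Lemma pu_div f g z : exU f z -> exU g z -> g z <> 0 -> pu (fun w => f w / g w) z = (pu f z * g z - f z * pu g z) / (g z) ^ 2.
Proof. intros. rewrite !pu_eq. rewrite (Derive_div (fun s => f (s, snd z)) (fun s => g (s, snd z))); auto. destruct z; reflexivity. destruct z; auto. Qed.
Lemma pv_div f g z : exV f z -> exV g z -> g z <> 0 -> pv (fun w => f w / g w) z = (pv f z * g z - f z * pv g z) / (g z) ^ 2.
Proof. intros. rewrite !pv_eq. rewrite (Derive_div (fun s => f (fst z, s)) (fun s => g (fst z, s))); auto. destruct z; reflexivity. destruct z; auto. Qed.
Lemma exU_div f g z : exU f z -> exU g z -> g z <> 0 -> exU (fun w => f w / g w) z.
Proof. intros. apply (ex_derive_div (fun s => f (s, snd z)) (fun s => g (s, snd z))); auto. destruct z; auto. Qed.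
Lemma exV_div f g z : exV f z -> exV g z -> g z <> 0 -> exV (fun w => f w / g w) z.
Proof. intros. apply (ex_derive_div (fun s => f (fst z, s)) (fun s => g (fst z, s))); auto. destruct z; auto. Qed.

Lemma C1_opp Om f : open Om -> C1_on Om f -> C1_on Om (fun w => - f w).
Proof. intros Hop Hf. apply (C1_ext Om Hop (fun w => (-1) * f w)). intros; ring. apply C1_mult; auto. apply C1_const; auto. Qed.
Lemma C2_opp Om f : open Om -> C2_on Om f -> C2_on Om (fun w => - f w).
Proof. intros Hop Hf. apply (C2_ext Om Hop (fun w => (-1) * f w)). intros; ring. apply C2_mult; auto. apply C2_const; auto. Qed.

Lemma nz_sq (c : C) : c <> 0%C -> fst c ^ 2 + snd c ^ 2 <> 0.
Proof. destruct c as [x y]. simpl. intros H E. apply H. assert (x = 0) by nra. assert (y = 0) by nra. subst. reflexivity. Qed.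

Section Main.
Variable Om : C -> Prop.
Variable g : C -> C.
Variables P Q : C -> R.
Hypothesis Hop : open Om.
Hypothesis Cg1 : C2_on Om (fun w => Re (g w)).
Hypothesis Cg2 : C2_on Om (fun w => Im (g w)).
Hypothesis CP : C2_on Om P.
Hypothesis CQ : C2_on Om Q.
Hypothesis Hg0 : forall z, Om z -> g z <> 0%C.
Hypothesis Hdzb : forall z, Om z -> dzb g z = 0%C.
Hypothesis Hlap : forall z, Om z -> dzzbR P z = (RtoC (Cmod (g z) ^ 2)%R * dzzbR Q z)%C.

Definition g1 := fun w => Re (g w).
Definition g2 := fun w => Im (g w).
Definition rr := fun w => g1 w ^ 2 + g2 w ^ 2.
Definition k1 := fun w => Re (/ g w)%C.
Definition k2 := fun w => Im (/ g w)%C.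

Lemma k1_eq : k1 = fun w => g1 w / rr w.
Proof. reflexivity. Qed.
Lemma k2_eq : k2 = fun w => (- g2 w) / rr w.
Proof. reflexivity. Qed.
Lemma rr_nz w : Om w -> rr w <> 0.
Proof. intros Hw. apply nz_sq. auto. Qed.

Lemma C2g1 : C2_on Om g1. Proof. exact Cg1. Qed.
Lemma C2g2 : C2_on Om g2. Proof. exact Cg2. Qed.
Lemma C2rr : C2_on Om rr.
Proof. unfold rr. apply (C2_ext Om Hop (fun w => g1 w * g1 w + g2 w * g2 w)). intros; ring. apply C2_plus; auto; apply C2_mult; auto using C2g1, C2g2. Qed.
Lemma C2k1 : C2_on Om k1.
Proof. rewrite k1_eq. change (C2_on Om (fun w => g1 w * / rr w)). apply C2_mult; auto using C2g1. apply C2_inv; auto using C2rr, rr_nz. Qed.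
Lemma C2k2 : C2_on Om k2.
Proof. rewrite k2_eq. change (C2_on Om (fun w => - g2 w * / rr w)). apply C2_mult; auto. apply C2_opp; auto using C2g2. apply C2_inv; auto using C2rr, rr_nz. Qed.

Lemma CRg z : Om z -> pu g1 z = pv g2 z /\ pv g1 z = - pu g2 z.
Proof. intros Hz. assert (E := Hdzb z Hz). rewrite dzb_eq in E.
assert (E1 := f_equal fst E). assert (E2 := f_equal snd E). simpl in E1, E2. unfold g1, g2. split; lra. Qed.

Lemma pu_rr z : Om z -> pu rr z = 2 * g1 z * pu g1 z + 2 * g2 z * pu g2 z.
Proof. intros Hz. assert (C1g1 := C2_C1 _ _ C2g1). assert (C1g2 := C2_C1 _ _ C2g2).
unfold rr. rewrite pu_plus, !pu_pow2; eauto using C1_exU, exU_pow2. Qed.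
Lemma pv_rr z : Om z -> pv rr z = 2 * g1 z * pv g1 z + 2 * g2 z * pv g2 z.
Proof. intros Hz. assert (C1g1 := C2_C1 _ _ C2g1). assert (C1g2 := C2_C1 _ _ C2g2).
unfold rr. rewrite pv_plus, !pv_pow2; eauto using C1_exV, exV_pow2. Qed.

Lemma CRk z : Om z -> pu k1 z = pv k2 z /\ pv k1 z = - pu k2 z.
Proof. intros Hz. assert (C1g1 := C2_C1 _ _ C2g1). assert (C1g2 := C2_C1 _ _ C2g2). assert (C1rr := C2_C1 _ _ C2rr).
assert (N := rr_nz z Hz). destruct (CRg z Hz) as [R1 R2].
rewrite k1_eq, k2_eq. rewrite pu_div, pv_div, pv_div, pu_div, pu_opp, pv_opp, pu_rr, pv_rr; eauto using C1_exU, C1_exV, exU_opp, exV_opp.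
rewrite R1, R2. unfold rr in *. split; field; auto.
Qed.


Lemma lap z : Om z -> pu (pu P) z + pv (pv P) z = rr z * (pu (pu Q) z + pv (pv Q) z).
Proof. intros Hz. assert (E := f_equal fst (Hlap z Hz)). rewrite !dzzbR_eq in E. simpl in E.
unfold Cmod in E. rewrite Rmult_1_r, sqrt_sqrt in E. 2:{ pose proof (pow2_ge_0 (fst (g z))); pose proof (pow2_ge_0 (snd (g z))); lra. }
unfold rr, g1, g2. unfold Re, Im. lra. Qed.

Definition aa := fun w => k1 w * pu P w + k2 w * pv P w + g1 w * pu Q w + g2 w * pv Q w.
Definition bb := fun w => k1 w * pv P w + - (k2 w * pu P w) + g1 w * pv Q w + - (g2 w * pu Q w).

Ltac atoms := 
  pose proof (C2_C1 _ _ C2k1); pose proof (C2_C1 _ _ C2k2); pose proof (C2_C1 _ _ C2g1); pose proof (C2_C1 _ _ C2g2);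
  pose proof (C2_pu _ _ CP); pose proof (C2_pv _ _ CP); pose proof (C2_pu _ _ CQ); pose proof (C2_pv _ _ CQ).

Lemma C1aa : C1_on Om aa.
Proof. atoms. unfold aa. repeat apply C1_plus; try apply C1_mult; auto. Qed.
Lemma C1bb : C1_on Om bb.
Proof. atoms. unfold bb. repeat apply C1_plus; try apply (C1_opp Om); auto; apply C1_mult; auto. Qed.

Ltac exatoms z Hz :=
  atoms;
  repeat match goal with H : C1_on Om ?f |- _ =>
    pose proof (C1_exU Om f z H Hz); pose proof (C1_exV Om f z H Hz); clear H end.

Lemma closed z : Om z -> pv aa z = pu bb z.
Proof.
intros Hz. exatoms z Hz. unfold aa, bb.
rewrite !pv_plus; try (eauto 10 using exV_plus, exV_mult, exV_opp; fail).
rewrite !pv_mult; try (eauto; fail).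
rewrite !pu_plus; try (eauto 10 using exU_plus, exU_mult, exU_opp; fail).
rewrite !pu_opp, !pu_mult; try (eauto; fail).
destruct (CRg z Hz) as [Rg1 Rg2]. destruct (CRk z Hz) as [Rk1 Rk2].
rewrite <- Rg1, Rg2, <- Rk1, Rk2.
rewrite (schwarz Om P z), (schwarz Om Q z); auto.
assert (L := lap z Hz).
replace (pv (pv P) z) with (rr z * (pu (pu Q) z + pv (pv Q) z) - pu (pu P) z) by lra.
replace (k2 z) with (- g2 z / rr z) by reflexivity.
field. apply rr_nz; auto.
Qed.


Lemma F_eq z : Om z -> (/ g z * dzR P z + g z * dzR Q z)%C = (aa z / 2, - bb z / 2).
Proof.
intros Hz. rewrite !dzR_eq. unfold aa, bb, k1, k2, g1, g2, Re, Im.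
generalize (nz_sq _ (Hg0 z Hz)). destruct (g z) as [x y]. intros Hn. simpl in Hn.
unfold Cmult, Cplus, Cinv. simpl. apply injective_projections; simpl; field; intro HH; apply Hn; ring_simplify; ring_simplify in HH; lra.
Qed.

Lemma part1 : simply_connected Om -> exists M : C -> R, C2_on Om M /\
  forall z, Om z -> dzR M z = (/ g z * dzR P z + g z * dzR Q z)%C.
Proof.
intros Hs.
destruct (exact_form Om aa bb) as [M HM]; auto.
- intros z Hz. apply (C1_cont Om aa z C1aa Hz).
- intros z Hz. apply (C1_cont Om bb z C1bb Hz).
- intros x y H. exact (C1_exU Om bb (x,y) C1bb H).
- intros x y H. assert (E := C1_cpu Om bb (x,y) C1bb H). apply cont_C in E. rewrite puF in E. simpl in E. exact E.
- intros x y H. assert (E := C1_exV Om aa (x,y) C1aa H). unfold exV in E. simpl in E.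
  replace (Derive (fun s => bb (s, y)) x) with (Derive (fun t => aa (x, t)) y). apply Derive_correct; auto.
  transitivity (pv aa (x,y)). rewrite pv_eq; reflexivity. rewrite (closed (x,y) H), pu_eq. reflexivity.
- assert (puM : forall w, Om w -> pu M w = aa w).
  { intros w Hw. rewrite pu_eq. apply is_derive_unique. apply HM; auto. }
  assert (pvM : forall w, Om w -> pv M w = bb w).
  { intros w Hw. rewrite pv_eq. apply is_derive_unique. apply HM; auto. }
  exists M. split.
  + split; [|split].
    * apply (C1_intro Om); intros z Hz.
      -- apply HM; auto.
      -- exists (aa z). apply HM; auto.
      -- exists (bb z). apply HM; auto.
      -- apply (cont_ext Om Hop aa). intros w Hw; symmetry; auto. auto. apply (C1_cont Om aa z C1aa Hz).
      -- apply (cont_ext Om Hop bb). intros w Hw; symmetry; auto. auto. apply (C1_cont Om bb z C1bb Hz).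
    * apply (C1_ext Om Hop aa). intros w Hw; symmetry; auto. apply C1aa.
    * apply (C1_ext Om Hop bb). intros w Hw; symmetry; auto. apply C1bb.
  + intros z Hz. rewrite F_eq, dzR_eq, puM, pvM; auto.
Qed.


Lemma lapM z : Om z -> pu aa z + pv bb z = 2 * k1 z * (pu (pu P) z + pv (pv P) z).
Proof.
intros Hz. exatoms z Hz. unfold aa, bb.
rewrite !pu_plus; try (eauto 10 using exU_plus, exU_mult, exU_opp; fail).
rewrite !pu_mult; try (eauto; fail).
rewrite !pv_plus; try (eauto 10 using exV_plus, exV_mult, exV_opp; fail).
rewrite !pv_opp, !pv_mult; try (eauto; fail).
destruct (CRg z Hz) as [Rg1 Rg2]. destruct (CRk z Hz) as [Rk1 Rk2].
rewrite <- Rg1, Rg2, <- Rk1, Rk2.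
rewrite (schwarz Om P z), (schwarz Om Q z); auto.
assert (L := lap z Hz).
replace (pv (pv P) z) with (rr z * (pu (pu Q) z + pv (pv Q) z) - pu (pu P) z) by lra.
replace (k1 z) with (g1 z / rr z) by reflexivity.
field. apply rr_nz; auto.
Qed.

Lemma negconjinv_nz (c : C) : c <> 0%C -> (- / Cconj c)%C <> 0%C.
Proof.
intros H E. assert (Hn := nz_sq c H). apply H. destruct c as [x y]. simpl in Hn.
assert (E1 := f_equal fst E). assert (E2 := f_equal snd E). unfold Copp, Cinv, Cconj in E1, E2. simpl in E1, E2.
assert (D : x * x + - y * - y <> 0). { intro HH. apply Hn. ring_simplify. ring_simplify in HH. lra. }
assert (X : x = 0). { apply Rmult_eq_reg_r with (/ (x * (x * 1) + - y * (- y * 1))). rewrite Rmult_0_l. 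
  unfold Rdiv in E1. lra. apply Rinv_neq_0_compat. intro HH; apply D; ring_simplify; ring_simplify in HH; lra. }
assert (Y : y = 0). { apply Rmult_eq_reg_r with (/ (x * (x * 1) + - y * (- y * 1))). rewrite Rmult_0_l.
  unfold Rdiv in E2. lra. apply Rinv_neq_0_compat. intro HH; apply D; ring_simplify; ring_simplify in HH; lra. }
subst. reflexivity.
Qed.

Lemma part2 M : C2_on Om M -> (forall z, Om z -> dzR M z = (/ g z * dzR P z + g z * dzR Q z)%C) ->
  (forall z, Om z -> dzR P z - RtoC (Cmod (g z) ^ 2)%R * dzR Q z <> 0)%C ->
  WD2 Om (fun z => / g z)%C M (fun z => (2 * P z)%R) /\
  forall z, Om z -> (dzR M z - RtoC (Re (/ g z)) * dzR (fun z => (2 * P z)%R) z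
    = - / Cconj (g z) * (dzR P z - RtoC ((Cmod (g z) ^ 2)%R) * dzR Q z))%C.
Proof.
intros CM HM Hnd.
assert (puM : forall w, Om w -> pu M w = aa w).
{ intros w Hw. assert (E := f_equal fst (HM w Hw)). rewrite F_eq, dzR_eq in E by auto. simpl in E. lra. }
assert (pvM : forall w, Om w -> pv M w = bb w).
{ intros w Hw. assert (E := f_equal snd (HM w Hw)). rewrite F_eq, dzR_eq in E by auto. simpl in E. lra. }
assert (CN : C2_on Om (fun z => (2 * P z)%R)). { apply C2_mult; auto. apply C2_const; auto. }
assert (puN : pu (fun z => (2 * P z)%R) = fun w => 2 * pu P w). { apply functional_extensionality; intros; apply pu_scal. }
assert (pvN : pv (fun z => (2 * P z)%R) = fun w => 2 * pv P w). { apply functional_extensionality; intros; apply pv_scal. }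
assert (Ident : forall z, Om z -> (dzR M z - RtoC (Re (/ g z)) * dzR (fun z => (2 * P z)%R) z
    = - / Cconj (g z) * (dzR P z - RtoC ((Cmod (g z) ^ 2)%R) * dzR Q z))%C).
{ intros z Hz. rewrite HM by auto. rewrite !dzR_eq, puN, pvN.
  unfold Cmod. rewrite pow2_sqrt. 2:{ pose proof (pow2_ge_0 (fst (g z))); pose proof (pow2_ge_0 (snd (g z))); lra. }
  generalize (nz_sq _ (Hg0 z Hz)). destruct (g z) as [x y]. intros Hn. simpl in Hn.
  unfold Cmult, Cplus, Cminus, Copp, Cinv, Cconj, RtoC, Re. simpl.
  apply injective_projections; simpl; field; intro HH; apply Hn; ring_simplify; ring_simplify in HH; lra. }
split; [|exact Ident].
split; [split|split; [auto|split; [auto|split; [|split; [|split]]]]].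
- exact C2k1.
- exact C2k2.
- intros z Hz E. assert (X := Cinv_r (g z) (Hg0 z Hz)). rewrite E in X. assert (Y := f_equal fst X). simpl in Y. lra.
- intros z Hz. rewrite dzb_eq. destruct (CRk z Hz) as [R1 R2].
  change (fun w => Re (/ g w)%C) with k1. change (fun w => Im (/ g w)%C) with k2.
  rewrite R1, R2. apply injective_projections; simpl; field.
- intros z Hz. rewrite !dzzbR_eq.
  rewrite (schwarz Om M z), (schwarz Om (fun z => (2 * P z)%R) z); auto. rewrite puN, pvN.
  rewrite (pu_ext Om Hop (pu M) aa z), (pv_ext Om Hop (pv M) bb z); auto.
  rewrite pu_scal, pv_scal. rewrite (lapM z Hz).
  change (Re (/ g z)%C) with (k1 z). unfold RtoC, Cmult. apply injective_projections; simpl; field.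
- intros z Hz. rewrite Ident by auto. apply Cmult_neq_0. apply negconjinv_nz; auto. apply Hnd; auto.
Qed.

End Main.


Open Scope C_scope.

Theorem mainTheorem1 :
  forall (Om : C -> Prop) (g : C -> C) (P Q : C -> R),
    simply_connected Om ->
    WD1 Om g P Q ->
    let h : C -> C := fun z => / g z in
    let N : C -> R := fun z => (2 * P z)%R in
    (exists M : C -> R, C2_on Om M /\
       forall z, Om z -> dzR M z = / g z * dzR P z + g z * dzR Q z) /\
    (forall M : C -> R, C2_on Om M ->
       (forall z, Om z -> dzR M z = / g z * dzR P z + g z * dzR Q z) ->
       WD2 Om h M N /\
       forall z, Om z ->
         dzR M z - RtoC (Re (h z)) * dzR N z
         = - / Cconj (g z) * (dzR P z - RtoC ((Cmod (g z) ^ 2)%R) * dzR Q z)).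
Proof.
intros Om g P Q Hs HW h N.
destruct HW as [[Cg1 Cg2] [CP [CQ [Hg0 [Hdzb [Hlap Hnd]]]]]].
assert (Hop : open Om) by (destruct Hs as [[H _] _]; exact H).
split.
- eapply part1; eauto.
- intros M CM HM. unfold h, N. eapply part2; eauto.
Qed.
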